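(* For $\lambda=(\sigma,b,r)\in(0,\infty)^3$ let $\mathscr A_\lambda\subseteq\mathbb R^3$ be the global attractor of the semigroup generated by the Lorenz system $x'=-\sigma x+\sigma y$, $y'=rx-y-xz$, $z'=-bz+xy$. There is a residual and dense subset $\Lambda_*\subseteq(0,\infty)^3$ such that the map $(0,\infty)^3\to CB(\mathbb R^3)$, $\lambda\mapsto\mathscr A_\lambda$, is continuous at every $\lambda\in\Lambda_*$.
   Context: For each $\lambda\in(0,\infty)^3$ the Lorenz system generates a semigroup $S_\lambda(t)$ on $\mathbb R^3$ possessing a global attractor, i.e. a compact invariant set attracting every bounded set. $CB(\mathbb R^3)$ is the space of nonempty closed bounded subsets of $\mathbb R^3$ with the Hausdorff metric $\Delta(A,C)=\max(\sup_{a\in A}\inf_{c\in C}|a-c|,\sup_{c\in C}\inf_{a\in A}|a-c|)$. A set is residual if its complement is a countable union of nowhere dense sets. *)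

(* Defs.v *)
From Stdlib Require Import Reals Lra.
From Coquelicot Require Import Coquelicot.
Open Scope R_scope.

(* Points of R^3 (and parameters lambda = (sigma, b, r)) as ((x, y), z). *)
Definition vec := (R * R * R)%type.
Definition vx (p : vec) : R := fst (fst p).
Definition vy (p : vec) : R := snd (fst p).
Definition vz (p : vec) : R := snd p.

Definition edist (p q : vec) : R :=
  sqrt ((vx p - vx q)^2 + (vy p - vy q)^2 + (vz p - vz q)^2).

Definition posoct (l : vec) : Prop := 0 < vx l /\ 0 < vy l /\ 0 < vz l.

Definition lorenz_solution (l : vec) (u : R -> vec) : Prop :=
  let sigma := vx l in let b := vy l in let r := vz l in
  (forall t, 0 < t ->
     is_derive (fun s => vx (u s)) t (- sigma * vx (u t) + sigma * vy (u t)) /\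
     is_derive (fun s => vy (u s)) t (r * vx (u t) - vy (u t) - vx (u t) * vz (u t)) /\
     is_derive (fun s => vz (u s)) t (- b * vz (u t) + vx (u t) * vy (u t))) /\
  filterlim (fun s => vx (u s)) (at_right 0) (locally (vx (u 0))) /\
  filterlim (fun s => vy (u s)) (at_right 0) (locally (vy (u 0))) /\
  filterlim (fun s => vz (u s)) (at_right 0) (locally (vz (u 0))).

Definition lorenz_S (l : vec) (t : R) (x y : vec) : Prop :=
  exists u, lorenz_solution l u /\ u 0 = x /\ u t = y.

Definition bounded3 (B : vec -> Prop) : Prop :=
  exists M, forall p, B p -> edist p (0, 0, 0) <= M.

Definition closed3 (A : vec -> Prop) : Prop :=
  forall p, (forall eps, 0 < eps -> exists a, A a /\ edist p a < eps) -> A p.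

(* Compact subsets of R^3 (Heine-Borel: closed and bounded). *)
Definition compact3 (A : vec -> Prop) : Prop := closed3 A /\ bounded3 A.

Definition is_global_attractor (l : vec) (A : vec -> Prop) : Prop :=
  compact3 A /\
  (forall t, 0 <= t -> forall y, A y <-> exists x, A x /\ lorenz_S l t x y) /\
  (forall B, bounded3 B -> forall eps, 0 < eps -> exists T, forall t, T <= t ->
     forall x y, B x -> lorenz_S l t x y -> exists a, A a /\ edist y a < eps).

Definition point_set_dist (a : vec) (C : vec -> Prop) : Rbar :=
  Glb_Rbar (fun s => exists c, C c /\ s = edist a c).
Definition excess (A C : vec -> Prop) : Rbar :=
  Lub_Rbar (fun s => exists a, A a /\ Finite s = point_set_dist a C).
Definition hausdorff_dist (A C : vec -> Prop) : Rbar :=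
  let e1 := excess A C in let e2 := excess C A in
  if Rbar_lt_dec e1 e2 then e2 else e1.

Definition nowhere_dense_in (X N : vec -> Prop) : Prop :=
  forall p, X p -> forall eps, 0 < eps ->
    exists q delta, X q /\ 0 < delta /\
      (forall z, X z -> edist q z < delta -> edist p z < eps) /\
      (forall z, X z -> edist q z < delta -> ~ N z).

Definition dense_in (X L : vec -> Prop) : Prop :=
  forall p, X p -> forall eps, 0 < eps -> exists q, L q /\ edist p q < eps.

Definition residual_in (X L : vec -> Prop) : Prop :=
  exists N : nat -> vec -> Prop,
    (forall n, nowhere_dense_in X (N n)) /\
    (forall p, X p -> ~ L p -> exists n, N n p).

(* Main.v *)
Require Import Defs.
From Stdlib Require Import Reals Lra Psatz Classical ClassicalEpsilon ZArith Cantor.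
From Coquelicot Require Import Coquelicot.
Open Scope R_scope.


Lemma cont_of_derive (g : R -> R) t d : is_derive g t d -> continuity_pt g t.
Proof.
  intros H. apply continuity_pt_filterlim. apply (ex_derive_continuous (V:=R_NormedModule)). exists d; exact H.
Qed.

Lemma mono_le (g dg : R -> R) (a b k : R) : a < b ->
  (forall t, a < t < b -> is_derive g t (dg t) /\ dg t <= k) ->
  (forall t, a <= t <= b -> continuity_pt g t) -> g b - g a <= k * (b - a).
Proof.
  intros Hab Hd Hc.
  set (df := fun x => if Rlt_dec a x then if Rlt_dec x b then dg x else k else k).
  destruct (MVT_gen g a b df) as [c [Hc1 Hc2]].
  - intros x Hx. rewrite Rmin_left in Hx by lra. rewrite Rmax_right in Hx by lra.
    unfold df. destruct (Rlt_dec a x); [|lra]. destruct (Rlt_dec x b); [|lra].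
    apply Hd; lra.
  - intros x Hx. rewrite Rmin_left in Hx by lra. rewrite Rmax_right in Hx by lra. apply Hc; lra.
  - rewrite Hc2. rewrite Rmin_left in Hc1 by lra. rewrite Rmax_right in Hc1 by lra.
    apply Rmult_le_compat_r; [lra|]. unfold df.
    destruct (Rlt_dec a c); [|lra]. destruct (Rlt_dec c b); [|lra]. apply Hd; lra.
Qed.

Lemma cont_nbhd (g : R -> R) s e : continuity_pt g s -> 0 < e ->
  exists eta, 0 < eta /\ forall u, Rabs (u - s) < eta -> Rabs (g u - g s) < e.
Proof.
  intros Hc He. apply continuity_pt_locally with (eps := mkposreal e He) in Hc.
  destruct Hc as [eta Heta]. exists eta. split; [apply cond_pos|].
  intros u Hu. apply Heta. exact Hu.
Qed.

Lemma last_below (g : R -> R) (W t : R) : 0 < t -> g 0 <= W ->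
  (forall s, 0 <= s <= t -> continuity_pt g s) ->
  exists s0, 0 <= s0 <= t /\ g s0 <= W /\ (forall s, s0 < s <= t -> W < g s).
Proof.
  intros Ht H0 Hc.
  set (E := fun s => 0 <= s <= t /\ g s <= W).
  destruct (completeness E) as [s0 [Hub Hlub]].
  - exists t. intros s [Hs _]. lra.
  - exists 0. split; [lra|exact H0].
  - assert (Hs0 : 0 <= s0 <= t).
    { split. apply Hub. split; [lra|exact H0].
      apply Hlub. intros s [Hs _]. lra. }
    exists s0. split; [exact Hs0|]. split.
    + destruct (Rle_dec (g s0) W) as [Hle|Hgt]; [exact Hle|exfalso].
      destruct (cont_nbhd g s0 (g s0 - W) (Hc s0 Hs0)) as [eta [Heta Hn]]; [lra|].
      assert (Hub' : forall s, E s -> s <= s0 - eta).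
      { intros s Es. destruct (Rle_dec s (s0 - eta)) as [h|h]; [exact h|].
        exfalso. destruct Es as [Es1 Es2]. assert (s <= s0) by (apply Hub; split; assumption).
        specialize (Hn s). assert (Hab : Rabs (s - s0) < eta) by (rewrite Rabs_left1; lra).
        specialize (Hn Hab). rewrite Rabs_lt_between in Hn. lra. }
      specialize (Hlub (s0 - eta) Hub'). lra.
    + intros s Hs. destruct (Rle_dec (g s) W) as [Hle|Hgt]; [|lra].
      exfalso. assert (s <= s0) by (apply Hub; split; [lra|exact Hle]). lra.
Qed.

Lemma barrier_cap (g dg : R -> R) (W W' : R) :
  (forall t, 0 < t -> is_derive g t (dg t)) ->
  continuity_pt g 0 ->
  (forall t, 0 < t -> W <= g t <= W' -> dg t <= 0) ->
  g 0 <= W -> W < W' -> forall t, 0 <= t -> g t <= W.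
Proof.
  intros Hd Hc0 Hdg H0 HW t Ht.
  assert (Hc : forall s, 0 <= s -> continuity_pt g s).
  { intros s Hs. destruct (Req_dec s 0) as [->|]. exact Hc0. apply (cont_of_derive g s (dg s)), Hd; lra. }
  destruct (Req_dec t 0) as [->|Ht0]; [exact H0|].
  destruct (Rle_dec (g t) W) as [|Hgt]; [assumption|exfalso].
  destruct (last_below g W t) as [s0 [Hs0 [Hgs0 Hafter]]]; [lra|exact H0|intros; apply Hc; lra|].
  assert (s0 < t). { destruct (Req_dec s0 t) as [->|]; [lra|lra]. }
  destruct (cont_nbhd g s0 (W' - W) (Hc s0 (proj1 Hs0))) as [eta [Heta Hn]]; [lra|].
  set (t2 := Rmin t (s0 + eta/2)).
  assert (Ht2 : s0 < t2 <= t) by (unfold t2; split; [apply Rmin_glb_lt; lra|apply Rmin_l]).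
  assert (Hm := mono_le g dg s0 t2 0 (proj1 Ht2)).
  assert (g t2 - g s0 <= 0 * (t2 - s0)).
  { apply Hm.
    - intros u Hu. split. apply Hd; lra. apply Hdg; [lra|]. split.
      + left. apply Hafter; lra.
      + assert (Hue : Rabs (u - s0) < eta).
        { rewrite Rabs_right by lra. unfold t2 in Hu. 
          assert (u <= Rmin t (s0 + eta / 2)) by lra.
          assert (Rmin t (s0 + eta/2) <= s0 + eta/2) by apply Rmin_r. lra. }
        specialize (Hn u Hue). rewrite Rabs_lt_between in Hn. lra.
    - intros u Hu. apply Hc; lra. }
  specialize (Hafter t2 Ht2). lra.
Qed.

Lemma barrier_decay (g dg : R -> R) (W d : R) : 0 <= d ->
  (forall t, 0 < t -> is_derive g t (dg t)) ->
  continuity_pt g 0 ->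
  (forall t, 0 < t -> W <= g t -> dg t <= - d) ->
  forall t, 0 <= t -> g t <= Rmax W (g 0 - d * t).
Proof.
  intros Hd0 Hd Hc0 Hdg t Ht.
  assert (Hc : forall s, 0 <= s -> continuity_pt g s).
  { intros s Hs. destruct (Req_dec s 0) as [->|]. exact Hc0. apply (cont_of_derive g s (dg s)), Hd; lra. }
  destruct (Req_dec t 0) as [->|Ht0]. { rewrite Rmult_0_r, Rminus_0_r. apply Rmax_r. }
  destruct (Rle_dec (g 0) W) as [H0|H0].
  - destruct (Rle_dec (g t) W) as [|Hgt]. { eapply Rle_trans; [eassumption|apply Rmax_l]. }
    exfalso.
    destruct (last_below g W t) as [s0 [Hs0 [Hgs0 Hafter]]]; [lra|exact H0|intros; apply Hc; lra|].
    assert (s0 < t). { destruct (Req_dec s0 t) as [->|]; [lra|lra]. }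
    assert (g t - g s0 <= (- d) * (t - s0)).
    { apply (mono_le g dg); [lra| |intros; apply Hc; lra].
      intros u Hu. split. apply Hd; lra. apply Hdg; [lra|]. left; apply Hafter; lra. }
    nra.
  -
    destruct (Rle_dec (g t) (g 0 - d * t)) as [h|h]. { eapply Rle_trans; [eassumption|apply Rmax_r]. }
    destruct (Rle_dec (g t) W) as [|Hgt]. { eapply Rle_trans; [eassumption|apply Rmax_l]. }
    exfalso.
    set (E := fun s => 0 <= s <= t /\ (s = 0 \/ g s <= W)).
    destruct (completeness E) as [s0 [Hub Hlub]].
    { exists t. intros s [Hs _]. lra. }
    { exists 0. split; [lra|left; reflexivity]. }
    assert (Hs0 : 0 <= s0 <= t).
    { split. apply Hub. split; [lra|left; reflexivity]. apply Hlub. intros s [Hs _]. lra. }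
    assert (Hafter : forall s, s0 < s <= t -> W < g s).
    { intros s Hs. destruct (Rle_dec (g s) W) as [Hle|]; [|lra].
      exfalso. assert (s <= s0) by (apply Hub; split; [lra|right; exact Hle]). lra. }
    destruct (Req_dec s0 0) as [Hz|Hnz].
    + assert (g t - g 0 <= (- d) * (t - 0)).
      { apply (mono_le g dg); [lra| |intros; apply Hc; lra].
        intros u Hu. split. apply Hd; lra. apply Hdg; [lra|]. left; apply Hafter; lra. }
      lra.
    + assert (Hgs0 : g s0 <= W).
      { destruct (Rle_dec (g s0) W) as [Hle|Hg]; [exact Hle|exfalso].
        destruct (cont_nbhd g s0 (g s0 - W) (Hc s0 (proj1 Hs0))) as [eta [Heta Hn]]; [lra|].
        set (eta' := Rmin eta s0).
        assert (Heta' : 0 < eta' <= eta /\ eta' <= s0) by (unfold eta'; split; [split|]; [apply Rmin_glb_lt; lra|apply Rmin_l|apply Rmin_r]).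
        assert (Hub' : forall s, E s -> s <= s0 - eta').
        { intros s Es. destruct (Rle_dec s (s0 - eta')) as [h'|h']; [exact h'|].
          exfalso. assert (s <= s0) by (apply Hub; exact Es). destruct Es as [Es1 [Es2|Es2]]; [lra|].
          assert (Hab : Rabs (s - s0) < eta) by (rewrite Rabs_left1; lra).
          specialize (Hn s Hab). rewrite Rabs_lt_between in Hn. lra. }
        specialize (Hlub (s0 - eta') Hub'). lra. }
      assert (s0 < t). { destruct (Req_dec s0 t) as [->|]; [lra|lra]. }
      assert (g t - g s0 <= (- d) * (t - s0)).
      { apply (mono_le g dg); [lra| |intros; apply Hc; lra].
        intros u Hu. split. apply Hd; lra. apply Hdg; [lra|]. left; apply Hafter; lra. }
      nra.
Qed.

Lemma gronwall (g dg : R -> R) (K B : R) : 0 < K -> 0 <= B ->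
  (forall t, 0 < t -> is_derive g t (dg t) /\ dg t <= K * g t + B) ->
  continuity_pt g 0 -> g 0 = 0 -> forall t, 0 <= t -> g t <= B / K * (exp (K*t) - 1).
Proof.
  intros HK HB Hd Hc0 H0 t Ht.
  set (h := fun s => (g s + B / K) * exp (- K * s)).
  set (dh := fun s => (dg s - K * g s - B) * exp (- K * s)).
  assert (Hdh : forall s, 0 < s -> is_derive h s (dh s)).
  { intros s Hs. unfold h, dh.
    evar (l : R). replace ((dg s - K * g s - B) * exp (- K * s)) with l.
    apply (is_derive_mult (fun s => g s + B / K) (fun s => exp (- K * s))).
    - apply (is_derive_plus g (fun _ => B / K)). apply Hd; lra. apply is_derive_const.
    - apply (is_derive_comp exp (fun s => - K * s)). apply is_derive_exp.
      apply (is_derive_scal (fun s => s)). apply is_derive_id.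
    - intros; apply Rmult_comm.
    - unfold l. simpl. unfold plus, mult, scal, zero, one; simpl. unfold mult; simpl. field. lra. }
  assert (Hch : forall s, 0 <= s -> continuity_pt h s).
  { intros s Hs. destruct (Req_dec s 0) as [->|].
    - unfold h. apply continuity_pt_mult. apply continuity_pt_plus. exact Hc0. apply continuity_pt_const; intros ? ?; reflexivity.
      apply continuity_pt_comp with (f1 := fun s => - K * s). apply continuity_pt_scal. apply continuity_pt_id.
      apply derivable_continuous_pt, derivable_pt_exp.
    - apply (cont_of_derive h s (dh s)), Hdh; lra. }
  destruct (Req_dec t 0) as [->|Ht0]. { rewrite H0, Rmult_0_r, exp_0. lra. }
  assert (h t - h 0 <= 0 * (t - 0)).
  { apply (mono_le h dh). lra. intros u Hu. split. apply Hdh; lra.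
    unfold dh. destruct (Hd u (proj1 Hu)) as [_ Hle].
    assert (0 < exp (- K * u)) by apply exp_pos. nra.
    intros; apply Hch; lra. }
  unfold h in H. rewrite H0, Rmult_0_r, exp_0 in H.
  assert (Hexp : exp (- K * t) * exp (K * t) = 1).
  { rewrite <- exp_plus. replace (- K * t + K * t) with 0 by ring. apply exp_0. }
  assert (0 < exp (K * t)) by apply exp_pos.
  assert ((g t + B / K) * exp (- K * t) * exp (K*t) <= B / K * exp (K*t)) by
    (apply Rmult_le_compat_r; lra).
  rewrite Rmult_assoc, Hexp in H2. lra.
Qed.

Lemma cont_from_ed (f : R -> R) s :
  (forall e, 0 < e -> exists d, 0 < d /\ forall u, Rabs (u - s) < d -> Rabs (f u - f s) < e) ->
  continuity_pt f s.
Proof.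
  intros H. apply continuity_pt_locally. intros eps.
  destruct (H eps (cond_pos eps)) as [d [Hd Hu]].
  exists (mkposreal d Hd). intros y Hy. apply Hu. exact Hy.
Qed.

Lemma cont_lip1 (f : R -> R) s : (forall a b, Rabs (f a - f b) <= Rabs (a - b)) -> continuity_pt f s.
Proof.
  intros H. apply cont_from_ed. intros e He. exists e. split; [lra|]. intros u Hu.
  eapply Rle_lt_trans; [apply H|exact Hu].
Qed.

Definition snorm (p q : vec) := Rabs (vx p - vx q) + Rabs (vy p - vy q) + Rabs (vz p - vz q).
Definition lipG (g : vec -> R) L := forall p q, Rabs (g p - g q) <= L * snorm p q.

Lemma cont_lipG (g : vec -> R) L (p : R -> vec) s : 0 < L -> lipG g L ->
  continuity_pt (fun t => vx (p t)) s -> continuity_pt (fun t => vy (p t)) s ->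
  continuity_pt (fun t => vz (p t)) s -> continuity_pt (fun t => g (p t)) s.
Proof.
  intros HL Hg H1 H2 H3. apply cont_from_ed. intros e He.
  assert (He' : 0 < e / (3 * L)) by (apply Rdiv_lt_0_compat; lra).
  destruct (cont_nbhd _ s _ H1 He') as [d1 [Hd1 K1]].
  destruct (cont_nbhd _ s _ H2 He') as [d2 [Hd2 K2]].
  destruct (cont_nbhd _ s _ H3 He') as [d3 [Hd3 K3]].
  exists (Rmin d1 (Rmin d2 d3)). split. repeat apply Rmin_glb_lt; lra.
  intros u Hu.
  assert (Rabs (u - s) < d1) by (eapply Rlt_le_trans; [exact Hu|apply Rmin_l]).
  assert (Rabs (u - s) < d2) by (eapply Rlt_le_trans; [exact Hu|eapply Rle_trans; [apply Rmin_r|apply Rmin_l]]).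
  assert (Rabs (u - s) < d3) by (eapply Rlt_le_trans; [exact Hu|eapply Rle_trans; [apply Rmin_r|apply Rmin_r]]).
  specialize (K1 u H). specialize (K2 u H0). specialize (K3 u H4).
  eapply Rle_lt_trans; [apply Hg|]. unfold snorm.
  replace e with (L * (3 * (e / (3 * L)))) by (field; lra).
  apply Rmult_lt_compat_l; lra.
Qed.

Lemma FTC0 (f : R -> R) : (forall s, continuity_pt f s) ->
  forall t, is_derive (fun t => RInt f 0 t) t (f t).
Proof.
  intros Hf t. apply (is_derive_RInt f (fun t => RInt f 0 t) 0 t).
  - apply filter_forall. intros b. apply (RInt_correct (V:=R_CompleteNormedModule)). apply (ex_RInt_continuous (V:=R_CompleteNormedModule)).
    intros z _. apply continuity_pt_filterlim, Hf.
  - apply continuity_pt_filterlim, Hf.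
Qed.

Lemma ex_RInt_c (f : R -> R) a b : (forall s, continuity_pt f s) -> ex_RInt f a b.
Proof. intros Hf. apply (ex_RInt_continuous (V:=R_CompleteNormedModule)). intros z _. apply continuity_pt_filterlim, Hf. Qed.

Lemma derive_cRInt c (f : R -> R) : (forall s, continuity_pt f s) ->
  forall t, is_derive (fun t => c + RInt f 0 t) t (f t).
Proof.
  intros Hf t. evar (l : R). replace (f t) with l.
  apply (is_derive_plus (fun _ => c) (fun t => RInt f 0 t)). apply is_derive_const. apply FTC0, Hf.
  unfold l, plus, zero; simpl. ring.
Qed.

Lemma cont_cRInt c (f : R -> R) : (forall s, continuity_pt f s) ->
  forall t, continuity_pt (fun t => c + RInt f 0 t) t.
Proof. intros Hf t. apply (cont_of_derive _ t (f t)). apply derive_cRInt, Hf. Qed.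

Fixpoint pic (g1 g2 g3 : vec -> R) (x : vec) (n : nat) (t : R) : vec :=
  match n with
  | O => x
  | S m => (vx x + RInt (fun s => g1 (pic g1 g2 g3 x m s)) 0 t,
            vy x + RInt (fun s => g2 (pic g1 g2 g3 x m s)) 0 t,
            vz x + RInt (fun s => g3 (pic g1 g2 g3 x m s)) 0 t)
  end.

Lemma pic_cont g1 g2 g3 L x : 0 < L -> lipG g1 L -> lipG g2 L -> lipG g3 L ->
  forall n s, continuity_pt (fun t => vx (pic g1 g2 g3 x n t)) s /\
              continuity_pt (fun t => vy (pic g1 g2 g3 x n t)) s /\
              continuity_pt (fun t => vz (pic g1 g2 g3 x n t)) s.
Proof.
  intros HL H1 H2 H3. induction n as [|n IH]; intros s.
  - simpl. repeat split; apply continuity_pt_const; intros ? ?; reflexivity.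
  - assert (Hc : forall g, lipG g L -> forall s, continuity_pt (fun t => g (pic g1 g2 g3 x n t)) s).
    { intros g Hg s'. destruct (IH s') as [a [b c]]. exact (cont_lipG g L _ s' HL Hg a b c). }
    simpl. repeat split; apply cont_cRInt; apply Hc; assumption.
Qed.

Lemma int_pow c n t : RInt (fun s => c * s^(S n)) 0 t = c * t^(S (S n)) / INR (S (S n)).
Proof.
  apply is_RInt_unique.
  evar (l : R). replace (c * t ^ S (S n) / INR (S (S n))) with l.
  apply (is_RInt_derive (fun s => c * s^(S (S n)) / INR (S (S n)))).
  - intros s _. auto_derive. trivial.
    change (match n with | 0%nat => 1 | S _ => INR n + 1 end) with (INR (S n)).
    simpl pow. field. pose proof (pos_INR (S n)). lra.
  - intros s _. apply continuity_pt_filterlim. apply (continuity_pt_mult (fun _ => c) (fun s => s^(S n))).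
    apply continuity_pt_const; intros ? ?; reflexivity. apply derivable_continuous_pt, derivable_pt_pow.
  - unfold l, minus, plus, opp; simpl. field. change (match n with | 0%nat => 1 | S _ => INR n + 1 end) with (INR (S n)). pose proof (pos_INR (S n)). lra.
Qed.

Lemma RInt_diff (f1 f2 : R -> R) t : (forall s, continuity_pt f1 s) -> (forall s, continuity_pt f2 s) ->
  RInt f1 0 t - RInt f2 0 t = RInt (fun s => f1 s - f2 s) 0 t.
Proof.
  intros H1 H2. symmetry.
  assert (E := RInt_minus (V:=R_CompleteNormedModule) f1 f2 0 t (ex_RInt_c f1 0 t H1) (ex_RInt_c f2 0 t H2)).
  unfold minus, plus, opp in E; simpl in E. exact E.
Qed.

Lemma abs_RInt_bound (h g : R -> R) t : 0 <= t -> (forall s, continuity_pt h s) -> (forall s, continuity_pt g s) ->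
  (forall s, 0 <= s <= t -> Rabs (h s) <= g s) -> Rabs (RInt h 0 t) <= RInt g 0 t.
Proof.
  intros Ht Hh Hg Hb.
  assert (Ha : forall s, continuity_pt (fun s => Rabs (h s)) s).
  { intros s. apply (continuity_pt_comp h Rabs). apply Hh. apply Rcontinuity_abs. }
  eapply Rle_trans. apply abs_RInt_le. exact Ht. apply ex_RInt_c, Hh.
  apply RInt_le. exact Ht. apply ex_RInt_c, Ha. apply ex_RInt_c, Hg.
  intros s Hs. apply Hb. lra.
Qed.

Definition Cn (M0 L : R) (n : nat) := M0 * (3 * L)^n / INR (Factorial.fact (S n)).

Lemma pic_step_bound g1 g2 g3 L x : 0 < L -> lipG g1 L -> lipG g2 L -> lipG g3 L ->
  forall n t, 0 <= t ->
  snorm (pic g1 g2 g3 x (S n) t) (pic g1 g2 g3 x n t) <=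
    Cn (Rabs (g1 x) + Rabs (g2 x) + Rabs (g3 x)) L n * t^(S n).
Proof.
  intros HL H1 H2 H3. set (M0 := Rabs (g1 x) + Rabs (g2 x) + Rabs (g3 x)).
  assert (Hc := pic_cont g1 g2 g3 L x HL H1 H2 H3).
  assert (Hcg : forall g, lipG g L -> forall n s, continuity_pt (fun t => g (pic g1 g2 g3 x n t)) s).
  { intros g Hg n s'. destruct (Hc n s') as [a [b c]]. exact (cont_lipG g L _ s' HL Hg a b c). }
  induction n as [|n IH]; intros t Ht.
  - unfold snorm, Cn; cbn [pic vx vy vz fst snd].
    rewrite !RInt_const. unfold scal; simpl; unfold mult; simpl.
    replace (vx x + (t - 0) * g1 x - vx x) with (t * g1 x) by ring.
    replace (vy x + (t - 0) * g2 x - vy x) with (t * g2 x) by ring.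
    replace (vz x + (t - 0) * g3 x - vz x) with (t * g3 x) by ring.
    rewrite !Rabs_mult, (Rabs_right t) by lra. unfold M0. simpl. lra.
  - assert (Hcomp : forall g, lipG g L -> forall c,
      Rabs ((c + RInt (fun s => g (pic g1 g2 g3 x (S n) s)) 0 t) - (c + RInt (fun s => g (pic g1 g2 g3 x n s)) 0 t))
      <= L * (Cn M0 L n * t ^ S (S n) / INR (S (S n)))).
    { intros g Hg c.
      replace (c + RInt (fun s => g (pic g1 g2 g3 x (S n) s)) 0 t - (c + RInt (fun s => g (pic g1 g2 g3 x n s)) 0 t))
        with (RInt (fun s => g (pic g1 g2 g3 x (S n) s)) 0 t - RInt (fun s => g (pic g1 g2 g3 x n s)) 0 t) by ring.
      rewrite RInt_diff by (apply Hcg; exact Hg).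
      eapply Rle_trans. apply (abs_RInt_bound _ (fun s => (L * Cn M0 L n) * s^(S n))). exact Ht.
      { intros s. apply continuity_pt_minus; apply Hcg; exact Hg. }
      { intros s. apply (continuity_pt_mult (fun _ => _) (fun s => s^(S n))).
        apply continuity_pt_const; intros ? ?; reflexivity. apply derivable_continuous_pt, derivable_pt_pow. }
      { intros s Hs. eapply Rle_trans. apply Hg. rewrite Rmult_assoc. apply Rmult_le_compat_l. lra. apply IH. lra. }
      rewrite int_pow. right. field. apply not_0_INR. lia. }
    unfold snorm. cbn [pic vx vy vz fst snd].
    eapply Rle_trans. apply Rplus_le_compat. apply Rplus_le_compat.
    apply (Hcomp g1 H1). apply (Hcomp g2 H2). apply (Hcomp g3 H3).
    right. unfold Cn. change (Factorial.fact (S (S n))) with ((S (S n)) * Factorial.fact (S n))%nat.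
    rewrite mult_INR. simpl pow. field. split. apply INR_fact_neq_0. apply not_0_INR. lia.
Qed.

Definition Es (X : R) (N : nat) := sum_f_R0 (fun i => / INR (Factorial.fact i) * X^i) N.

Lemma Es_cv X : Un_cv (Es X) (exp X).
Proof. unfold exp, Es. destruct (exist_exp X) as [l Hl]. simpl. exact Hl. Qed.

Lemma snorm_tri p q r : snorm p r <= snorm p q + snorm q r.
Proof.
  unfold snorm.
  pose proof (Rabs_triang (vx p - vx q) (vx q - vx r)).
  pose proof (Rabs_triang (vy p - vy q) (vy q - vy r)).
  pose proof (Rabs_triang (vz p - vz q) (vz q - vz r)).
  replace (vx p - vx r) with (vx p - vx q + (vx q - vx r)) by ring.
  replace (vy p - vy r) with (vy p - vy q + (vy q - vy r)) by ring.
  replace (vz p - vz r) with (vz p - vz q + (vz q - vz r)) by ring. lra.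
Qed.

Lemma snorm_ge p q : Rabs (vx p - vx q) <= snorm p q /\ Rabs (vy p - vy q) <= snorm p q /\ Rabs (vz p - vz q) <= snorm p q.
Proof. unfold snorm. pose proof (Rabs_pos (vx p - vx q)). pose proof (Rabs_pos (vy p - vy q)). pose proof (Rabs_pos (vz p - vz q)). lra. Qed.

Lemma snorm_sym p q : snorm p q = snorm q p.
Proof. unfold snorm. rewrite (Rabs_minus_sym (vx p)), (Rabs_minus_sym (vy p)), (Rabs_minus_sym (vz p)). reflexivity. Qed.

Lemma snorm_pos p q : 0 <= snorm p q.
Proof. unfold snorm. pose proof (Rabs_pos (vx p - vx q)). pose proof (Rabs_pos (vy p - vy q)). pose proof (Rabs_pos (vz p - vz q)). lra. Qed.

Lemma pic_cauchy_bound g1 g2 g3 L x T : 0 < L -> lipG g1 L -> lipG g2 L -> lipG g3 L ->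
  forall t, 0 <= t <= T -> forall n j,
  snorm (pic g1 g2 g3 x (n + j) t) (pic g1 g2 g3 x n t) <=
   (Rabs (g1 x) + Rabs (g2 x) + Rabs (g3 x)) / (3 * L) * (Es (3 * L * T) (n + j) - Es (3 * L * T) n).
Proof.
  intros HL H1 H2 H3 t Ht n j. set (M0 := Rabs (g1 x) + Rabs (g2 x) + Rabs (g3 x)).
  assert (HM0 : 0 <= M0) by (unfold M0; pose proof (Rabs_pos (g1 x)); pose proof (Rabs_pos (g2 x)); pose proof (Rabs_pos (g3 x)); lra).
  induction j as [|j IH].
  - rewrite Nat.add_0_r. unfold snorm. rewrite !Rminus_diag, Rabs_R0. lra.
  - rewrite Nat.add_succ_r. eapply Rle_trans. apply snorm_tri with (q := pic g1 g2 g3 x (n + j) t).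
    eapply Rle_trans. apply Rplus_le_compat_r. apply (pic_step_bound g1 g2 g3 L x HL H1 H2 H3 (n + j) t (proj1 Ht)).
    fold M0. unfold Es at 1. rewrite tech5. fold (Es (3 * L * T) (n + j)).
    assert (Cn M0 L (n + j) * t ^ S (n + j) <= M0 / (3 * L) * (/ INR (Factorial.fact (S (n + j))) * (3 * L * T) ^ S (n + j))).
    { assert (E1 : M0 / (3 * L) * (/ INR (Factorial.fact (S (n + j))) * (3 * L * T) ^ S (n + j)) = Cn M0 L (n + j) * T ^ S (n + j)).
      { unfold Cn. rewrite !Rpow_mult_distr. simpl pow. field. split. apply INR_fact_neq_0. lra. }
      rewrite E1. apply Rmult_le_compat_l.
      unfold Cn. apply Rmult_le_pos. apply Rmult_le_pos. lra. apply pow_le; lra. left; apply Rinv_0_lt_compat, INR_fact_lt_0.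
      apply pow_incr; lra. }
    lra.
Qed.

Lemma seq_tail (u E : nat -> R) c e : 0 <= c -> Un_cv E e ->
  (forall n j, Rabs (u (n + j)%nat - u n) <= c * (E (n + j)%nat - E n)) ->
  exists l, Un_cv u l /\ forall n, Rabs (l - u n) <= c * (e - E n).
Proof.
  intros Hc HE Hu.
  assert (Hcau : ex_lim_seq_cauchy u).
  { intros eps. destruct (HE (eps / (2 * (c + 1)))) as [N HN].
    { apply Rdiv_lt_0_compat. apply cond_pos. lra. }
    exists N. intros n m Hn Hm.
    assert (forall a b, (N <= a)%nat -> (b >= a)%nat -> Rabs (u b - u a) < eps).
    { intros a b Ha Hb. replace b with (a + (b - a))%nat by lia.
      eapply Rle_lt_trans. apply Hu.
      assert (Rdist (E (a + (b - a))%nat) e < eps / (2 * (c + 1))) by (apply HN; lia).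
      assert (Rdist (E a) e < eps / (2 * (c + 1))) by (apply HN; lia).
      unfold Rdist in *. rewrite Rabs_lt_between in H, H0.
      assert (E (a + (b - a))%nat - E a < 2 * (eps / (2 * (c + 1)))) by lra.
      assert (c * (E (a + (b - a))%nat - E a) <= c * (2 * (eps / (2 * (c + 1))))) by (apply Rmult_le_compat_l; lra).
      assert (c * (2 * (eps / (2 * (c + 1)))) < eps).
      { replace (c * (2 * (eps / (2 * (c + 1))))) with (eps * (c / (c + 1))) by (field; lra).
        assert (c / (c + 1) < 1) by (apply Rmult_lt_reg_r with (c + 1); [lra|]; unfold Rdiv; rewrite Rmult_assoc, Rinv_l; lra).
        pose proof (cond_pos eps). nra. }
      lra. }
    destruct (Nat.le_ge_cases n m) as [h|h].
    - rewrite Rabs_minus_sym. apply H; lia.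
    - apply H; lia. }
  apply ex_lim_seq_cauchy_corr in Hcau. destruct Hcau as [l Hl].
  exists l. apply is_lim_seq_Reals in Hl. split; [exact Hl|].
  intros n. destruct (Rle_dec (Rabs (l - u n)) (c * (e - E n))) as [h|h]; [exact h|exfalso].
  set (d := Rabs (l - u n) - c * (e - E n)). assert (Hd : 0 < d) by (unfold d; lra).
  destruct (Hl (d / 2)) as [N1 HN1]; [lra|].
  destruct (HE (d / (2 * (c + 1)))) as [N2 HN2]; [apply Rdiv_lt_0_compat; lra|].
  set (m := (n + N1 + N2)%nat).
  specialize (HN1 m ltac:(unfold m; lia)). specialize (HN2 m ltac:(unfold m; lia)).
  specialize (Hu n (N1 + N2)%nat). replace (n + (N1 + N2))%nat with m in Hu by (unfold m; lia).
  unfold Rdist in *.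
  assert (c * Rabs (E m - e) <= c * (d / (2 * (c + 1)))) by (apply Rmult_le_compat_l; lra).
  assert (c * (d / (2 * (c + 1))) <= d / 2).
  { replace (c * (d / (2 * (c + 1)))) with (d / 2 * (c / (c + 1))) by (field; lra).
    assert (c / (c + 1) <= 1) by (apply Rmult_le_reg_r with (c + 1); [lra|]; unfold Rdiv; rewrite Rmult_assoc, Rinv_l; lra).
    assert (0 <= c / (c+1)) by (apply Rdiv_le_0_compat; lra). nra. }
  pose proof (Rabs_triang (l - u m) (u m - u n)). replace (l - u m + (u m - u n)) with (l - u n) in H1 by ring.
  rewrite (Rabs_minus_sym l (u m)) in H1.
  pose proof (Rle_abs (E m - e)). 
  assert (c * (E m - E n) = c * (E m - e) + c * (e - E n)) by ring.
  assert (c * (E m - e) <= c * Rabs (E m - e)) by (apply Rmult_le_compat_l; lra).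
  unfold d in *. lra.
Qed.

Definition pl g1 g2 g3 (x : vec) (t : R) : vec :=
  (real (Lim_seq (fun n => vx (pic g1 g2 g3 x n (Rmax 0 t)))),
   real (Lim_seq (fun n => vy (pic g1 g2 g3 x n (Rmax 0 t)))),
   real (Lim_seq (fun n => vz (pic g1 g2 g3 x n (Rmax 0 t))))).

Lemma Rmax0_lip a b : Rabs (Rmax 0 a - Rmax 0 b) <= Rabs (a - b).
Proof. unfold Rmax. destruct (Rle_dec 0 a), (Rle_dec 0 b); unfold Rabs; repeat destruct Rcase_abs; lra. Qed.

Lemma lim_unique_real (u : nat -> R) l : Un_cv u l -> real (Lim_seq u) = l.
Proof. intros H. apply is_lim_seq_Reals in H. rewrite (is_lim_seq_unique u l H). reflexivity. Qed.

Lemma pl_tail g1 g2 g3 L x T : 0 < L -> lipG g1 L -> lipG g2 L -> lipG g3 L -> 0 <= T ->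
  forall t, t <= T -> forall n,
  snorm (pl g1 g2 g3 x t) (pic g1 g2 g3 x n (Rmax 0 t)) <=
    3 * ((Rabs (g1 x) + Rabs (g2 x) + Rabs (g3 x)) / (3 * L)) * (exp (3 * L * T) - Es (3 * L * T) n).
Proof.
  intros HL H1 H2 H3 HT t Ht n.
  set (c := (Rabs (g1 x) + Rabs (g2 x) + Rabs (g3 x)) / (3 * L)).
  assert (Hc : 0 <= c).
  { unfold c. apply Rdiv_le_0_compat; [|lra].
    pose proof (Rabs_pos (g1 x)); pose proof (Rabs_pos (g2 x)); pose proof (Rabs_pos (g3 x)); lra. }
  assert (Ht' : 0 <= Rmax 0 t <= T) by (split; [apply Rmax_l|apply Rmax_lub; lra]).
  assert (HB := pic_cauchy_bound g1 g2 g3 L x T HL H1 H2 H3 (Rmax 0 t) Ht'). fold c in HB.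
  assert (Hcomp : forall (pr : vec -> R), (forall p q, Rabs (pr p - pr q) <= snorm p q) ->
     Rabs (real (Lim_seq (fun n => pr (pic g1 g2 g3 x n (Rmax 0 t)))) - pr (pic g1 g2 g3 x n (Rmax 0 t)))
       <= c * (exp (3 * L * T) - Es (3 * L * T) n)).
  { intros pr Hpr.
    destruct (seq_tail (fun n => pr (pic g1 g2 g3 x n (Rmax 0 t))) (Es (3 * L * T)) c (exp (3 * L * T)) Hc (Es_cv _))
      as [l [Hl Hb]].
    { intros m j. eapply Rle_trans. apply Hpr. apply HB. }
    rewrite (lim_unique_real _ l Hl). apply Hb. }
  unfold snorm at 1. unfold pl. cbn [vx vy vz fst snd].
  assert (A1 := Hcomp vx (fun p q => proj1 (snorm_ge p q))).
  assert (A2 := Hcomp vy (fun p q => proj1 (proj2 (snorm_ge p q)))).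
  assert (A3 := Hcomp vz (fun p q => proj2 (proj2 (snorm_ge p q)))).
  lra.
Qed.

Lemma tail_small X c : 0 <= c -> forall eps, 0 < eps -> exists N, forall n, (N <= n)%nat -> c * (exp X - Es X n) < eps.
Proof.
  intros Hc eps He. destruct (Es_cv X (eps / (c + 1))) as [N HN]. apply Rdiv_lt_0_compat; lra.
  exists N. intros n Hn. specialize (HN n Hn). unfold Rdist in HN.
  apply Rabs_lt_between in HN.
  assert (c * (exp X - Es X n) <= c * (eps / (c + 1))) by (apply Rmult_le_compat_l; lra).
  assert (c * (eps / (c + 1)) < eps).
  { replace (c * (eps / (c + 1))) with (eps * (c / (c + 1))) by (field; lra).
    assert (c / (c + 1) < 1) by (apply Rmult_lt_reg_r with (c + 1); [lra|]; unfold Rdiv; rewrite Rmult_assoc, Rinv_l; lra).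
    nra. }
  lra.
Qed.

Lemma pl_cont g1 g2 g3 L x : 0 < L -> lipG g1 L -> lipG g2 L -> lipG g3 L ->
  forall t0, continuity_pt (fun t => vx (pl g1 g2 g3 x t)) t0 /\
             continuity_pt (fun t => vy (pl g1 g2 g3 x t)) t0 /\
             continuity_pt (fun t => vz (pl g1 g2 g3 x t)) t0.
Proof.
  intros HL H1 H2 H3 t0.
  set (T := Rmax 0 t0 + 1).
  assert (HT : 0 <= T) by (unfold T; pose proof (Rmax_l 0 t0); lra).
  set (c := 3 * ((Rabs (g1 x) + Rabs (g2 x) + Rabs (g3 x)) / (3 * L))).
  assert (Hc : 0 <= c).
  { unfold c. apply Rmult_le_pos; [lra|]. apply Rdiv_le_0_compat; [|lra].
    pose proof (Rabs_pos (g1 x)); pose proof (Rabs_pos (g2 x)); pose proof (Rabs_pos (g3 x)); lra. }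
  assert (Htail := pl_tail g1 g2 g3 L x T HL H1 H2 H3 HT). fold c in Htail.
  assert (Hgen : forall pr : vec -> R, (forall p q, Rabs (pr p - pr q) <= snorm p q) ->
     (forall n s, continuity_pt (fun t => pr (pic g1 g2 g3 x n t)) s) ->
     continuity_pt (fun t => pr (pl g1 g2 g3 x t)) t0).
  { intros pr Hpr Hpc. apply cont_from_ed. intros e He.
    destruct (tail_small (3 * L * T) c Hc (e / 3)) as [N HN]; [lra|].
    assert (Hcn : continuity_pt (fun t => pr (pic g1 g2 g3 x N (Rmax 0 t))) t0).
    { apply (continuity_pt_comp (fun t => Rmax 0 t) (fun s => pr (pic g1 g2 g3 x N s))).
      apply cont_lip1, Rmax0_lip. apply Hpc. }
    destruct (cont_nbhd _ t0 (e / 3) Hcn) as [d [Hd Hn]]; [lra|].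
    exists (Rmin d 1). split; [apply Rmin_glb_lt; lra|]. intros u Hu.
    assert (Hud : Rabs (u - t0) < d) by (eapply Rlt_le_trans; [exact Hu|apply Rmin_l]).
    assert (Hu1 : Rabs (u - t0) < 1) by (eapply Rlt_le_trans; [exact Hu|apply Rmin_r]).
    assert (HuT : u <= T) by (unfold T; apply Rabs_lt_between in Hu1; pose proof (Rmax_r 0 t0); lra).
    assert (Ht0T : t0 <= T) by (unfold T; pose proof (Rmax_r 0 t0); lra).
    specialize (Hn u Hud). simpl in Hn.
    assert (A := Rle_trans _ _ _ (Hpr _ _) (Htail u HuT N)).
    assert (B := Rle_trans _ _ _ (Hpr _ _) (Htail t0 Ht0T N)).
    specialize (HN N (Nat.le_refl N)).
    replace (pr (pl g1 g2 g3 x u) - pr (pl g1 g2 g3 x t0)) with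
      ((pr (pl g1 g2 g3 x u) - pr (pic g1 g2 g3 x N (Rmax 0 u))) +
       (pr (pic g1 g2 g3 x N (Rmax 0 u)) - pr (pic g1 g2 g3 x N (Rmax 0 t0))) -
       (pr (pl g1 g2 g3 x t0) - pr (pic g1 g2 g3 x N (Rmax 0 t0)))) by ring.
    eapply Rle_lt_trans. apply Rabs_triang. 
    eapply Rle_lt_trans. apply Rplus_le_compat_r. apply Rabs_triang.
    rewrite Rabs_Ropp. lra. }
  assert (Hc' := pic_cont g1 g2 g3 L x HL H1 H2 H3).
  split; [|split]; apply Hgen.
  - intros p q; apply (proj1 (snorm_ge p q)).
  - intros n s; apply (Hc' n s).
  - intros p q; apply (proj1 (proj2 (snorm_ge p q))).
  - intros n s; apply (Hc' n s).
  - intros p q; apply (proj2 (proj2 (snorm_ge p q))).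
  - intros n s; apply (Hc' n s).
Qed.

Lemma zero_of_small a : (forall e, 0 < e -> Rabs a < e) -> a = 0.
Proof.
  intros H. destruct (Req_dec a 0) as [h|h]; [exact h|].
  specialize (H (Rabs a) (Rabs_pos_lt a h)). lra.
Qed.

Lemma pl_integral g1 g2 g3 L x : 0 < L -> lipG g1 L -> lipG g2 L -> lipG g3 L ->
  forall (pr : vec -> R) (g : vec -> R), lipG g L ->
  (forall p q, Rabs (pr p - pr q) <= snorm p q) ->
  (forall n t, pr (pic g1 g2 g3 x (S n) t) = pr x + RInt (fun s => g (pic g1 g2 g3 x n s)) 0 t) ->
  forall t, 0 <= t -> pr (pl g1 g2 g3 x t) = pr x + RInt (fun s => g (pl g1 g2 g3 x s)) 0 t.
Proof.
  intros HL H1 H2 H3 pr g Hg Hpr Hpic t Ht.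
  set (c := 3 * ((Rabs (g1 x) + Rabs (g2 x) + Rabs (g3 x)) / (3 * L))).
  assert (Hc : 0 <= c).
  { unfold c. apply Rmult_le_pos; [lra|]. apply Rdiv_le_0_compat; [|lra].
    pose proof (Rabs_pos (g1 x)); pose proof (Rabs_pos (g2 x)); pose proof (Rabs_pos (g3 x)); lra. }
  assert (Htail := pl_tail g1 g2 g3 L x t HL H1 H2 H3 Ht). fold c in Htail.
  assert (Hpc := pic_cont g1 g2 g3 L x HL H1 H2 H3).
  assert (Hplc := pl_cont g1 g2 g3 L x HL H1 H2 H3).
  assert (Cg : forall s, continuity_pt (fun s => g (pl g1 g2 g3 x s)) s).
  { intros s. destruct (Hplc s) as [a [b d]]. exact (cont_lipG g L _ s HL Hg a b d). }
  assert (Cgn : forall n s, continuity_pt (fun s => g (pic g1 g2 g3 x n s)) s).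
  { intros n s. destruct (Hpc n s) as [a [b d]]. exact (cont_lipG g L _ s HL Hg a b d). }
  apply Rminus_diag_uniq. apply zero_of_small. intros e He.
  destruct (tail_small (3 * L * t) c Hc (e/2) ltac:(lra)) as [N1 HN1].
  destruct (tail_small (3 * L * t) (t * (L * c)) ltac:(apply Rmult_le_pos; [lra|apply Rmult_le_pos; lra]) (e/2) ltac:(lra)) as [N2 HN2].
  set (N := (N1 + N2)%nat).
  assert (Hmax : Rmax 0 t = t) by (apply Rmax_right; lra).
  assert (Htail' := Htail t (Rle_refl t)). rewrite Hmax in Htail'.
  assert (A1 : Rabs (pr (pl g1 g2 g3 x t) - pr (pic g1 g2 g3 x (S N) t)) <= c * (exp (3 * L * t) - Es (3 * L * t) (S N))).
  { eapply Rle_trans; [apply Hpr|apply Htail']. }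
  assert (A2 : Rabs (RInt (fun s => g (pic g1 g2 g3 x N s)) 0 t - RInt (fun s => g (pl g1 g2 g3 x s)) 0 t)
               <= t * (L * (c * (exp (3 * L * t) - Es (3 * L * t) N)))).
  { rewrite RInt_diff by auto.
    assert (Q := abs_RInt_le_const (fun s => g (pic g1 g2 g3 x N s) - g (pl g1 g2 g3 x s)) 0 t
                   (L * (c * (exp (3 * L * t) - Es (3 * L * t) N))) Ht).
    rewrite Rminus_0_r in Q. apply Q.
    apply ex_RInt_c. intros s. apply continuity_pt_minus; auto.
    intros s Hs. eapply Rle_trans. apply Hg. apply Rmult_le_compat_l. lra.
    rewrite snorm_sym.
    assert (Hs' : s <= t) by lra. assert (Hpl := Htail s Hs' N).
    rewrite (Rmax_right 0 s) in Hpl by lra. exact Hpl. }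
  rewrite Hpic in A1.
  assert (B1 := HN1 (S N) ltac:(unfold N; lia)). assert (B2 := HN2 N ltac:(unfold N; lia)).
  replace (pr (pl g1 g2 g3 x t) - (pr x + RInt (fun s : R => g (pl g1 g2 g3 x s)) 0 t)) with
    ((pr (pl g1 g2 g3 x t) - (pr x + RInt (fun s : R => g (pic g1 g2 g3 x N s)) 0 t)) +
     (RInt (fun s => g (pic g1 g2 g3 x N s)) 0 t - RInt (fun s => g (pl g1 g2 g3 x s)) 0 t)) by ring.
  eapply Rle_lt_trans. apply Rabs_triang.
  replace (t * (L * (c * (exp (3 * L * t) - Es (3 * L * t) N)))) with
     (t * (L * c) * (exp (3 * L * t) - Es (3 * L * t) N)) in A2 by ring.
  lra.
Qed.

Lemma picard g1 g2 g3 L x : 0 < L -> lipG g1 L -> lipG g2 L -> lipG g3 L ->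
  exists p : R -> vec, p 0 = x /\
   (forall t, continuity_pt (fun s => vx (p s)) t /\ continuity_pt (fun s => vy (p s)) t /\
              continuity_pt (fun s => vz (p s)) t) /\
   (forall t, 0 < t -> is_derive (fun s => vx (p s)) t (g1 (p t)) /\
                      is_derive (fun s => vy (p s)) t (g2 (p t)) /\
                      is_derive (fun s => vz (p s)) t (g3 (p t))).
Proof.
  intros HL H1 H2 H3. exists (pl g1 g2 g3 x).
  assert (Hplc := pl_cont g1 g2 g3 L x HL H1 H2 H3).
  assert (I1 := pl_integral g1 g2 g3 L x HL H1 H2 H3 vx g1 H1 (fun p q => proj1 (snorm_ge p q)) (fun n t => eq_refl)).
  assert (I2 := pl_integral g1 g2 g3 L x HL H1 H2 H3 vy g2 H2 (fun p q => proj1 (proj2 (snorm_ge p q))) (fun n t => eq_refl)).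
  assert (I3 := pl_integral g1 g2 g3 L x HL H1 H2 H3 vz g3 H3 (fun p q => proj2 (proj2 (snorm_ge p q))) (fun n t => eq_refl)).
  assert (Cg : forall g, lipG g L -> forall s, continuity_pt (fun s => g (pl g1 g2 g3 x s)) s).
  { intros g Hg s. destruct (Hplc s) as [a [b d]]. exact (cont_lipG g L _ s HL Hg a b d). }
  split; [|split; [exact Hplc|]].
  - destruct x as [[a b] c].
    rewrite (surjective_pairing (pl _ _ _ _ 0)), (surjective_pairing (fst (pl _ _ _ _ 0))).
    change (fst (fst (pl g1 g2 g3 (a, b, c) 0))) with (vx (pl g1 g2 g3 (a, b, c) 0)).
    change (snd (fst (pl g1 g2 g3 (a, b, c) 0))) with (vy (pl g1 g2 g3 (a, b, c) 0)).
    change (snd (pl g1 g2 g3 (a, b, c) 0)) with (vz (pl g1 g2 g3 (a, b, c) 0)).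
    rewrite I1, I2, I3 by lra. rewrite !RInt_point. cbn. unfold zero; simpl. f_equal; [f_equal|]; ring.
  - intros t Ht.
    assert (Hloc : forall (pr : vec -> R) g, (forall t, 0 <= t -> pr (pl g1 g2 g3 x t) = pr x + RInt (fun s => g (pl g1 g2 g3 x s)) 0 t) ->
        lipG g L -> is_derive (fun s => pr (pl g1 g2 g3 x s)) t (g (pl g1 g2 g3 x t))).
    { intros pr g Hi Hg. apply (is_derive_ext_loc (fun s => pr x + RInt (fun s => g (pl g1 g2 g3 x s)) 0 s)).
      - exists (mkposreal t Ht). intros y Hy. simpl in Hy. unfold ball in Hy; simpl in Hy.
        unfold AbsRing_ball, abs, minus, plus, opp in Hy; simpl in Hy.
        apply Rabs_lt_between in Hy. symmetry. apply Hi. lra.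
      - apply derive_cRInt. apply Cg, Hg. }
    split; [|split]; apply Hloc; assumption.
Qed.

Definition F1 (l p : vec) := - vx l * vx p + vx l * vy p.
Definition F2 (l p : vec) := vz l * vx p - vy p - vx p * vz p.
Definition F3 (l p : vec) := - vy l * vz p + vx p * vy p.
Definition V (l p : vec) := vz l * vx p ^ 2 + vx l * vy p ^ 2 + vx l * (vz p - 2 * vz l) ^ 2.
Definition dVF (l p : vec) := 2 * vz l * vx p * F1 l p + 2 * vx l * vy p * F2 l p + 2 * vx l * (vz p - 2 * vz l) * F3 l p.

Definition inbox (m M : R) (l : vec) := m <= vx l <= M /\ m <= vy l <= M /\ m <= vz l <= M.
Definition C0 m M := 1 + M + 2 * M / m.
Definition WbM m M := 2 * M^3 + C0 m M * (M^3 + 1 / (2 * m)).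
Definition Rb m M W := 2 * M + 1 + W / m.

Lemma prod3_le a b c M : 0 <= a <= M -> 0 <= b <= M -> 0 <= c <= M -> a * b * c <= M^3.
Proof. intros. simpl. assert (a*b <= M*M) by (apply Rmult_le_compat; lra).
  assert (0 <= a * b) by nra. replace (M*(M*(M*1))) with (M*M*M) by ring. apply Rmult_le_compat; lra. Qed.

Lemma Vdot_neg m M l p : 0 < m -> inbox m M l -> WbM m M <= V l p -> dVF l p <= -1.
Proof.
  intros Hm [[s1 s2] [[b1 b2] [r1 r2]]] HV.
  unfold WbM, C0, V, dVF, F1, F2, F3 in *.
  set (s := vx l) in *. set (b := vy l) in *. set (r := vz l) in *.
  set (x := vx p) in *. set (y := vy p) in *. set (z := vz p) in *.
  set (Q := r * x^2 + y^2 + b * (z - r)^2).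
  set (C := 1 + M + 2 * M / m).
  assert (HC1 : 1 <= C) by (unfold C; assert (0 <= 2 * M / m) by (apply Rdiv_le_0_compat; lra); lra).
  assert (HC2 : s <= C) by (unfold C; assert (0 <= 2 * M / m) by (apply Rdiv_le_0_compat; lra); lra).
  assert (HC3 : 2 * s <= C * b).
  { unfold C. assert (2 * M / m * b >= 2 * M). 
    { unfold Rdiv. replace (2 * M * / m * b) with (2 * M * (b / m)) by (field; lra).
      assert (b / m >= 1). { apply Rle_ge. apply Rmult_le_reg_r with m; [lra|]. unfold Rdiv. rewrite Rmult_assoc, Rinv_l; lra. }
      nra. }
    nra. }
  assert (Hsr : s * r * r <= M^3) by (apply prod3_le; lra).
  assert (Hbr : b * r * r <= M^3) by (apply prod3_le; lra).
  assert (HVQ : s * y^2 + r * x^2 + s * (z - 2 * r)^2 <= C * Q + 2 * M^3).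
  { unfold Q. assert (0 <= (C - 1) * (r * x^2)) by (apply Rmult_le_pos; nra).
    assert (0 <= (C - s) * y^2) by (apply Rmult_le_pos; nra).
    assert (s * (z - 2 * r)^2 <= 2 * s * (z - r)^2 + 2 * (s * r * r)).
    { assert (0 <= s * (z * z)) by (apply Rmult_le_pos; nra). 
      replace (2 * s * (z - r)^2 + 2 * (s * r * r) - s * (z - 2 * r)^2) with (s * (z * z)) by ring. lra. }
    assert (2 * s * (z - r)^2 <= C * b * (z - r)^2) by (apply Rmult_le_compat_r; [apply pow2_ge_0|lra]).
    lra. }
  assert (HdV : 2 * r * x * (- s * x + s * y) + 2 * s * y * (r * x - y - x * z) + 2 * s * (z - 2 * r) * (- b * z + x * y)
                = - 2 * s * Q + 2 * s * (b * r * r)) by (unfold Q; ring).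
  rewrite HdV.
  assert (HQ : M^3 + 1 / (2 * m) <= Q).
  { apply Rmult_le_reg_l with C; [lra|]. fold C in HV. lra. }
  assert (2 * s * (M^3 + 1 / (2*m)) <= 2 * s * Q) by (apply Rmult_le_compat_l; lra).
  assert (2 * s * (b * r * r) <= 2 * s * M^3) by (apply Rmult_le_compat_l; lra).
  assert (2 * s * (1 / (2 * m)) >= 1).
  { replace (2 * s * (1 / (2 * m))) with (s / m) by (field; lra).
    apply Rle_ge. apply Rmult_le_reg_r with m; [lra|]. unfold Rdiv. rewrite Rmult_assoc, Rinv_l; lra. }
  nra.
Qed.

Lemma abs_le_1sq a : Rabs a <= 1 + a^2.
Proof. unfold Rabs; destruct Rcase_abs; nra. Qed.

Lemma V_coords m M l p W : 0 < m -> inbox m M l -> V l p <= W ->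
  Rabs (vx p) <= Rb m M W /\ Rabs (vy p) <= Rb m M W /\ Rabs (vz p) <= Rb m M W.
Proof.
  intros Hm [[s1 s2] [[b1 b2] [r1 r2]]] HV. unfold V, Rb in *.
  assert (H0 : 0 <= vz l * vx p^2) by (apply Rmult_le_pos; [lra|apply pow2_ge_0]).
  assert (H1 : 0 <= vx l * vy p^2) by (apply Rmult_le_pos; [lra|apply pow2_ge_0]).
  assert (H2 : 0 <= vx l * (vz p - 2 * vz l)^2) by (apply Rmult_le_pos; [lra|apply pow2_ge_0]).
  assert (K0 : m * vx p^2 <= vz l * vx p^2) by (apply Rmult_le_compat_r; [apply pow2_ge_0|lra]).
  assert (K1 : m * vy p^2 <= vx l * vy p^2) by (apply Rmult_le_compat_r; [apply pow2_ge_0|lra]).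
  assert (K2 : m * (vz p - 2 * vz l)^2 <= vx l * (vz p - 2 * vz l)^2) by (apply Rmult_le_compat_r; [apply pow2_ge_0|lra]).
  assert (Hx : vx p ^ 2 <= W / m). { apply Rmult_le_reg_r with m; [lra|]. unfold Rdiv. rewrite Rmult_assoc, Rinv_l by lra. lra. }
  assert (Hy : vy p ^ 2 <= W / m). { apply Rmult_le_reg_r with m; [lra|]. unfold Rdiv. rewrite Rmult_assoc, Rinv_l by lra. lra. }
  assert (Hz : (vz p - 2 * vz l) ^ 2 <= W / m). { apply Rmult_le_reg_r with m; [lra|]. unfold Rdiv. rewrite Rmult_assoc, Rinv_l by lra. lra. }
  pose proof (abs_le_1sq (vx p)). pose proof (abs_le_1sq (vy p)). pose proof (abs_le_1sq (vz p - 2 * vz l)).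
  pose proof (Rabs_triang (vz p - 2 * vz l) (2 * vz l)). replace (vz p - 2 * vz l + 2 * vz l) with (vz p) in H5 by ring.
  rewrite (Rabs_right (2 * vz l)) in H5 by lra. lra.
Qed.

Lemma dV_chain (l : vec) (u : R -> vec) t a b c :
  is_derive (fun s => vx (u s)) t a -> is_derive (fun s => vy (u s)) t b -> is_derive (fun s => vz (u s)) t c ->
  is_derive (fun s => V l (u s)) t (2 * vz l * vx (u t) * a + 2 * vx l * vy (u t) * b + 2 * vx l * (vz (u t) - 2 * vz l) * c).
Proof.
  intros Ha Hb Hc. apply is_derive_Reals in Ha, Hb, Hc. apply is_derive_Reals. unfold V.
  replace (2 * vz l * vx (u t) * a + 2 * vx l * vy (u t) * b + 2 * vx l * (vz (u t) - 2 * vz l) * c) with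
    ((vz l * (INR 2 * vx (u t) ^ 1 * a) + vx l * (INR 2 * vy (u t) ^ 1 * b)) + vx l * (INR 2 * (vz (u t) - 2 * vz l) ^ 1 * (c - 0)))
    by (simpl; ring).
  apply (derivable_pt_lim_plus (fun s => vz l * vx (u s) ^ 2 + vx l * vy (u s) ^ 2) (fun s => vx l * (vz (u s) - 2 * vz l) ^ 2)).
  apply (derivable_pt_lim_plus (fun s => vz l * vx (u s) ^ 2) (fun s => vx l * vy (u s) ^ 2)).
  - apply (derivable_pt_lim_scal (fun s => vx (u s) ^ 2)). apply (derivable_pt_lim_comp (fun s => vx (u s)) (fun y => y^2)). exact Ha. apply derivable_pt_lim_pow.
  - apply (derivable_pt_lim_scal (fun s => vy (u s) ^ 2)). apply (derivable_pt_lim_comp (fun s => vy (u s)) (fun y => y^2)). exact Hb. apply derivable_pt_lim_pow.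
  - apply (derivable_pt_lim_scal (fun s => (vz (u s) - 2 * vz l) ^ 2)). apply (derivable_pt_lim_comp (fun s => vz (u s) - 2 * vz l) (fun y => y^2)).
    apply (derivable_pt_lim_minus (fun s => vz (u s)) (fun _ => 2 * vz l)). exact Hc. apply derivable_pt_lim_const.
    apply derivable_pt_lim_pow.
Qed.

Lemma V_cont (l : vec) (u : R -> vec) t :
  continuity_pt (fun s => vx (u s)) t -> continuity_pt (fun s => vy (u s)) t -> continuity_pt (fun s => vz (u s)) t ->
  continuity_pt (fun s => V l (u s)) t.
Proof.
  intros Ha Hb Hc. unfold V.
  assert (Hk : continuity_pt (fun _ => 2 * vz l) t) by (apply continuity_pt_const; intros ? ?; reflexivity).
  assert (Hz : continuity_pt (fun s => vz (u s) - 2 * vz l) t) by (apply (continuity_pt_minus (fun s => vz (u s)) (fun _ => 2 * vz l)); assumption).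
  apply (continuity_pt_plus (fun s => vz l * vx (u s) ^ 2 + vx l * vy (u s) ^ 2) (fun s => vx l * (vz (u s) - 2 * vz l) ^ 2)).
  apply (continuity_pt_plus (fun s => vz l * vx (u s) ^ 2) (fun s => vx l * vy (u s) ^ 2)).
  - apply (continuity_pt_scal (fun s => vx (u s) ^ 2)). apply (continuity_pt_comp (fun s => vx (u s)) (fun y => y^2)). exact Ha. apply derivable_continuous_pt, derivable_pt_pow.
  - apply (continuity_pt_scal (fun s => vy (u s) ^ 2)). apply (continuity_pt_comp (fun s => vy (u s)) (fun y => y^2)). exact Hb. apply derivable_continuous_pt, derivable_pt_pow.
  - apply (continuity_pt_scal (fun s => (vz (u s) - 2 * vz l) ^ 2)). apply (continuity_pt_comp (fun s => vz (u s) - 2 * vz l) (fun y => y^2)). exact Hz. apply derivable_continuous_pt, derivable_pt_pow.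
Qed.

Definition cl (R0 s : R) := Rmax (- R0) (Rmin R0 s).
Definition clip (R0 : R) (p : vec) : vec := (cl R0 (vx p), cl R0 (vy p), cl R0 (vz p)).

Lemma cl_lip R0 a b : 0 <= R0 -> Rabs (cl R0 a - cl R0 b) <= Rabs (a - b).
Proof. intros. unfold cl, Rmax, Rmin. repeat destruct Rle_dec; unfold Rabs; repeat destruct Rcase_abs; lra. Qed.
Lemma cl_bnd R0 a : 0 <= R0 -> Rabs (cl R0 a) <= R0.
Proof. intros. unfold cl, Rmax, Rmin. repeat destruct Rle_dec; unfold Rabs; repeat destruct Rcase_abs; lra. Qed.
Lemma cl_id R0 a : Rabs a <= R0 -> cl R0 a = a.
Proof. intros H. unfold cl, Rmax, Rmin. unfold Rabs in H; destruct Rcase_abs; repeat destruct Rle_dec; lra. Qed.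

Lemma prod_diff a1 a2 b1 b2 R0 : Rabs a1 <= R0 -> Rabs b2 <= R0 ->
  Rabs (a1 * a2 - b1 * b2) <= R0 * (Rabs (a1 - b1) + Rabs (a2 - b2)).
Proof.
  intros H1 H2. replace (a1 * a2 - b1 * b2) with (a1 * (a2 - b2) + b2 * (a1 - b1)) by ring.
  eapply Rle_trans. apply Rabs_triang. rewrite !Rabs_mult.
  assert (Rabs a1 * Rabs (a2 - b2) <= R0 * Rabs (a2 - b2)) by (apply Rmult_le_compat_r; [apply Rabs_pos|lra]).
  assert (Rabs b2 * Rabs (a1 - b1) <= R0 * Rabs (a1 - b1)) by (apply Rmult_le_compat_r; [apply Rabs_pos|lra]).
  lra.
Qed.

Definition Lc (l : vec) R0 := Rabs (vx l) + Rabs (vy l) + Rabs (vz l) + 2 * R0 + 2.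

Lemma snorm_clip R0 p q : 0 <= R0 -> snorm (clip R0 p) (clip R0 q) <= snorm p q.
Proof. intros H. unfold snorm, clip; cbn [vx vy vz fst snd].
  pose proof (cl_lip R0 (vx p) (vx q) H). pose proof (cl_lip R0 (vy p) (vy q) H). pose proof (cl_lip R0 (vz p) (vz q) H). lra. Qed.

Lemma lip_gen (F : vec -> R) l R0 : 0 <= R0 ->
  (forall p q, Rabs (vx p) <= R0 -> Rabs (vy p) <= R0 -> Rabs (vz p) <= R0 ->
               Rabs (vx q) <= R0 -> Rabs (vy q) <= R0 -> Rabs (vz q) <= R0 ->
               Rabs (F p - F q) <= Lc l R0 * snorm p q) ->
  lipG (fun p => F (clip R0 p)) (Lc l R0).
Proof.
  intros H0 HF p q. eapply Rle_trans. apply HF; unfold clip; cbn [vx vy vz fst snd]; apply cl_bnd; lra.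
  apply Rmult_le_compat_l. unfold Lc. pose proof (Rabs_pos (vx l)). pose proof (Rabs_pos (vy l)). pose proof (Rabs_pos (vz l)). lra.
  apply snorm_clip; lra.
Qed.

Lemma Lc_pos l R0 : 0 <= R0 -> 0 < Lc l R0.
Proof. intros. unfold Lc. pose proof (Rabs_pos (vx l)). pose proof (Rabs_pos (vy l)). pose proof (Rabs_pos (vz l)). lra. Qed.

Lemma comb3 a1 a2 a3 k1 k2 k3 K X : 0 <= a1 -> 0 <= a2 -> 0 <= a3 -> k1 <= K -> k2 <= K -> k3 <= K ->
  X <= k1 * a1 + k2 * a2 + k3 * a3 -> X <= K * (a1 + a2 + a3).
Proof.
  intros. assert (k1 * a1 <= K * a1) by (apply Rmult_le_compat_r; lra).
  assert (k2 * a2 <= K * a2) by (apply Rmult_le_compat_r; lra).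
  assert (k3 * a3 <= K * a3) by (apply Rmult_le_compat_r; lra). lra.
Qed.

Lemma lip1 l R0 : 0 <= R0 -> lipG (fun p => F1 l (clip R0 p)) (Lc l R0).
Proof.
  intros H0. apply lip_gen; [lra|]. intros p q _ _ _ _ _ _. unfold F1, snorm, Lc.
  replace (- vx l * vx p + vx l * vy p - (- vx l * vx q + vx l * vy q)) with (vx l * (vy p - vy q) - vx l * (vx p - vx q)) by ring.
  eapply Rle_trans. apply Rabs_triang. rewrite Rabs_Ropp, !Rabs_mult.
  pose proof (Rabs_pos (vx l)). pose proof (Rabs_pos (vy l)). pose proof (Rabs_pos (vz l)).
  pose proof (Rabs_pos (vx p - vx q)). pose proof (Rabs_pos (vy p - vy q)). pose proof (Rabs_pos (vz p - vz q)).
  nra.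
Qed.

Lemma lip2 l R0 : 0 <= R0 -> lipG (fun p => F2 l (clip R0 p)) (Lc l R0).
Proof.
  intros H0. apply lip_gen; [lra|]. intros p q Hp1 _ _ _ _ Hq3. unfold F2, snorm, Lc.
  replace (vz l * vx p - vy p - vx p * vz p - (vz l * vx q - vy q - vx q * vz q)) with
    (vz l * (vx p - vx q) - (vy p - vy q) - (vx p * vz p - vx q * vz q)) by ring.
  pose proof (prod_diff (vx p) (vz p) (vx q) (vz q) R0 Hp1 Hq3).
  pose proof (Rabs_triang (vz l * (vx p - vx q) - (vy p - vy q)) (- (vx p * vz p - vx q * vz q))).
  pose proof (Rabs_triang (vz l * (vx p - vx q)) (- (vy p - vy q))).
  rewrite Rabs_Ropp in H1, H2. rewrite Rabs_mult in H2.
  pose proof (Rabs_pos (vx l)). pose proof (Rabs_pos (vy l)). pose proof (Rabs_pos (vz l)).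
  apply (comb3 _ _ _ (Rabs (vz l) + R0) 1 R0); try apply Rabs_pos; try lra.
  unfold Rminus in *. lra.
Qed.

Lemma lip3 l R0 : 0 <= R0 -> lipG (fun p => F3 l (clip R0 p)) (Lc l R0).
Proof.
  intros H0. apply lip_gen; [lra|]. intros p q Hp1 _ _ _ Hq2 _. unfold F3, snorm, Lc.
  replace (- vy l * vz p + vx p * vy p - (- vy l * vz q + vx q * vy q)) with
    ((vx p * vy p - vx q * vy q) - vy l * (vz p - vz q)) by ring.
  pose proof (prod_diff (vx p) (vy p) (vx q) (vy q) R0 Hp1 Hq2).
  pose proof (Rabs_triang (vx p * vy p - vx q * vy q) (- (vy l * (vz p - vz q)))).
  rewrite Rabs_Ropp, Rabs_mult in H1.
  pose proof (Rabs_pos (vx l)). pose proof (Rabs_pos (vy l)). pose proof (Rabs_pos (vz l)).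
  apply (comb3 _ _ _ R0 R0 (Rabs (vy l))); try apply Rabs_pos; try lra.
  unfold Rminus in *. lra.
Qed.

Lemma clip_id R0 p : Rabs (vx p) <= R0 -> Rabs (vy p) <= R0 -> Rabs (vz p) <= R0 -> clip R0 p = p.
Proof. intros. unfold clip. rewrite !cl_id by assumption. destruct p as [[a b] c]. reflexivity. Qed.

Lemma inbox_of l : posoct l -> inbox (Rmin (vx l) (Rmin (vy l) (vz l))) (Rmax (vx l) (Rmax (vy l) (vz l))) l
   /\ 0 < Rmin (vx l) (Rmin (vy l) (vz l)).
Proof.
  intros [H1 [H2 H3]]. unfold inbox.
  repeat split;
  repeat first [apply Rmin_glb_lt | apply Rmin_glb | apply Rmax_lub | apply Rle_max_compat_l]; try lra;
  try (apply Rmin_l); try (apply Rmax_l);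
  try (eapply Rle_trans; [apply Rmin_r|]); try (eapply Rle_trans; [|apply Rmax_r]);
  try apply Rmin_l; try apply Rmin_r; try apply Rmax_l; try apply Rmax_r; lra.
Qed.

Lemma V_nonneg l p : posoct l -> 0 <= V l p.
Proof. intros [H1 [H2 H3]]. unfold V.
  assert (0 <= vz l * vx p ^ 2) by (apply Rmult_le_pos; [lra|apply pow2_ge_0]).
  assert (0 <= vx l * vy p ^ 2) by (apply Rmult_le_pos; [lra|apply pow2_ge_0]).
  assert (0 <= vx l * (vz p - 2 * vz l) ^ 2) by (apply Rmult_le_pos; [lra|apply pow2_ge_0]). lra. Qed.

Lemma cont_right0 (f : R -> R) : continuity_pt f 0 -> filterlim f (at_right 0) (locally (f 0)).
Proof. intros H. apply continuity_pt_filterlim in H. eapply filterlim_filter_le_1; [|exact H]. apply filter_le_within. Qed.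

Lemma lorenz_exists l x : posoct l -> exists u, lorenz_solution l u /\ u 0 = x.
Proof.
  intros Hl. destruct (inbox_of l Hl) as [Hbox Hm].
  set (m := Rmin (vx l) (Rmin (vy l) (vz l))) in *. set (M := Rmax (vx l) (Rmax (vy l) (vz l))) in *.
  set (W := Rmax (V l x) (WbM m M)). set (W' := W + 1). set (R0 := Rb m M W').
  assert (HW0 : 0 <= W) by (unfold W; eapply Rle_trans; [apply V_nonneg, Hl|apply Rmax_l]).
  assert (HR0 : 0 <= R0).
  { unfold R0, Rb. assert (0 <= W' / m) by (apply Rdiv_le_0_compat; unfold W'; lra).
    destruct Hbox as [[h1 h2] _]. lra. }
  destruct (picard (fun p => F1 l (clip R0 p)) (fun p => F2 l (clip R0 p)) (fun p => F3 l (clip R0 p)) (Lc l R0) x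
     (Lc_pos l R0 HR0) (lip1 l R0 HR0) (lip2 l R0 HR0) (lip3 l R0 HR0)) as [p [Hp0 [Hpc Hpd]]].
  set (dg := fun t => 2 * vz l * vx (p t) * F1 l (clip R0 (p t)) + 2 * vx l * vy (p t) * F2 l (clip R0 (p t))
                      + 2 * vx l * (vz (p t) - 2 * vz l) * F3 l (clip R0 (p t))).
  assert (Hgd : forall t, 0 < t -> is_derive (fun s => V l (p s)) t (dg t)).
  { intros t Ht. destruct (Hpd t Ht) as [a [b c]]. apply dV_chain; assumption. }
  assert (Hbar : forall t, 0 <= t -> V l (p t) <= W).
  { apply (barrier_cap (fun s => V l (p s)) dg W W' Hgd).
    - destruct (Hpc 0) as [a [b c]]. apply V_cont; assumption.
    - intros t Ht [HW1 HW2]. destruct (V_coords m M l (p t) W' Hm Hbox HW2) as [c1 [c2 c3]].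
      unfold dg. rewrite clip_id by assumption. fold (dVF l (p t)).
      assert (dVF l (p t) <= -1). { apply (Vdot_neg m M); try assumption. eapply Rle_trans; [apply Rmax_r|exact HW1]. }
      lra.
    - rewrite Hp0. apply Rmax_l.
    - unfold W'; lra. }
  assert (Hid : forall t, 0 <= t -> clip R0 (p t) = p t).
  { intros t Ht. destruct (V_coords m M l (p t) W' Hm Hbox) as [c1 [c2 c3]]. specialize (Hbar t Ht). unfold W'; lra.
    apply clip_id; assumption. }
  exists p. split; [|exact Hp0]. unfold lorenz_solution. split.
  - intros t Ht. destruct (Hpd t Ht) as [a [b c]]. rewrite (Hid t) in a, b, c by lra. exact (conj a (conj b c)).
  - destruct (Hpc 0) as [a [b c]]. split; [|split]; apply cont_right0; assumption.
Qed.

Definition ue (u : R -> vec) (t : R) : vec := if Rle_dec t 0 then u 0 else u t.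

Lemma right_cont_ed (f : R -> R) : filterlim f (at_right 0) (locally (f 0)) ->
  forall e, 0 < e -> exists d, 0 < d /\ forall s, 0 < s < d -> Rabs (f s - f 0) < e.
Proof.
  intros H e He. apply filterlim_locally with (eps := mkposreal e He) in H.
  destruct H as [d Hd]. exists d. split; [apply cond_pos|]. intros s Hs.
  apply Hd. unfold ball; simpl. unfold AbsRing_ball, abs, minus, plus, opp; simpl. rewrite Ropp_0, Rplus_0_r, Rabs_right by lra. lra. lra.
Qed.

Lemma ue_cont0 (u : R -> vec) (pr : vec -> R) : filterlim (fun s => pr (u s)) (at_right 0) (locally (pr (u 0))) ->
  continuity_pt (fun s => pr (ue u s)) 0.
Proof.
  intros H. apply cont_from_ed. intros e He. destruct (right_cont_ed _ H e He) as [d [Hd Hs]].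
  exists d. split; [lra|]. intros s Hsd. unfold ue. destruct (Rle_dec 0 0) as [_|n]; [|lra].
  destruct (Rle_dec s 0). rewrite Rminus_diag, Rabs_R0; lra.
  apply Hs. rewrite Rminus_0_r in Hsd. apply Rabs_lt_between in Hsd. lra.
Qed.

Lemma ue_eq u t : 0 <= t -> ue u t = u t.
Proof. intros. unfold ue. destruct (Rle_dec t 0). f_equal; lra. reflexivity. Qed.

Lemma ue_derive (u : R -> vec) (pr : vec -> R) t d : 0 < t -> is_derive (fun s => pr (u s)) t d ->
  is_derive (fun s => pr (ue u s)) t d.
Proof.
  intros Ht H. apply (is_derive_ext_loc (fun s => pr (u s))); [|exact H].
  exists (mkposreal t Ht). intros y Hy. unfold ball in Hy; simpl in Hy.
  unfold AbsRing_ball, abs, minus, plus, opp in Hy; simpl in Hy. apply Rabs_lt_between in Hy.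
  rewrite ue_eq by lra. reflexivity.
Qed.

Lemma sol_ext l u : lorenz_solution l u ->
  (forall t, 0 < t -> is_derive (fun s => vx (ue u s)) t (F1 l (ue u t)) /\
                     is_derive (fun s => vy (ue u s)) t (F2 l (ue u t)) /\
                     is_derive (fun s => vz (ue u s)) t (F3 l (ue u t))) /\
  (forall t, 0 <= t -> continuity_pt (fun s => vx (ue u s)) t /\ continuity_pt (fun s => vy (ue u s)) t /\
                     continuity_pt (fun s => vz (ue u s)) t).
Proof.
  intros [Hd [H1 [H2 H3]]].
  assert (D : forall t, 0 < t -> is_derive (fun s => vx (ue u s)) t (F1 l (ue u t)) /\
                     is_derive (fun s => vy (ue u s)) t (F2 l (ue u t)) /\
                     is_derive (fun s => vz (ue u s)) t (F3 l (ue u t))).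
  { intros t Ht. rewrite ue_eq by lra. destruct (Hd t Ht) as [a [b c]].
    split; [|split]; apply ue_derive; try assumption. }
  split; [exact D|]. intros t Ht. destruct (Req_dec t 0) as [->|Hn].
  - split; [|split]; apply ue_cont0; assumption.
  - destruct (D t ltac:(lra)) as [a [b c]].
    split; [|split]; eapply cont_of_derive; eassumption.
Qed.

Lemma sol_decay m M l u : 0 < m -> inbox m M l -> lorenz_solution l u ->
  forall t, 0 <= t -> V l (u t) <= Rmax (WbM m M) (V l (u 0) - t).
Proof.
  intros Hm Hb Hs. destruct (sol_ext l u Hs) as [Hd Hc].
  set (dg := fun t => 2 * vz l * vx (ue u t) * F1 l (ue u t) + 2 * vx l * vy (ue u t) * F2 l (ue u t)
                      + 2 * vx l * (vz (ue u t) - 2 * vz l) * F3 l (ue u t)).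
  intros t Ht.
  assert (B := barrier_decay (fun s => V l (ue u s)) dg (WbM m M) 1 ltac:(lra)).
  rewrite <- (ue_eq u t Ht). replace (u 0) with (ue u 0) by (apply ue_eq; lra). rewrite <- (Rmult_1_l t) at 2.
  apply B; [| | |exact Ht].
  - intros s Hs'. destruct (Hd s Hs') as [a [b c]]. apply dV_chain; assumption.
  - destruct (Hc 0 (Rle_refl 0)) as [a [b c]]. apply V_cont; assumption.
  - intros s Hs' HW. unfold dg. fold (dVF l (ue u s)). apply (Vdot_neg m M); assumption.
Qed.

Lemma edist_coord p q : Rabs (vx p - vx q) <= edist p q /\ Rabs (vy p - vy q) <= edist p q /\ Rabs (vz p - vz q) <= edist p q.
Proof.
  unfold edist. set (a := vx p - vx q). set (b := vy p - vy q). set (c := vz p - vz q).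
  assert (forall w, w^2 <= a^2 + b^2 + c^2 -> Rabs w <= sqrt (a^2 + b^2 + c^2)).
  { intros w Hw. rewrite <- sqrt_Rsqr_abs. apply sqrt_le_1_alt. unfold Rsqr. simpl in Hw. lra. }
  split; [|split]; apply H; pose proof (pow2_ge_0 a); pose proof (pow2_ge_0 b); pose proof (pow2_ge_0 c); lra.
Qed.

Lemma edist_le_sum p q : edist p q <= Rabs (vx p - vx q) + Rabs (vy p - vy q) + Rabs (vz p - vz q).
Proof.
  unfold edist. set (a := vx p - vx q). set (b := vy p - vy q). set (c := vz p - vz q).
  assert (0 <= Rabs a + Rabs b + Rabs c) by (pose proof (Rabs_pos a); pose proof (Rabs_pos b); pose proof (Rabs_pos c); lra).
  rewrite <- (sqrt_pow2 (Rabs a + Rabs b + Rabs c)) by exact H. apply sqrt_le_1_alt.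
  assert (a^2 = Rabs a ^ 2) by (unfold Rabs; destruct Rcase_abs; ring).
  assert (b^2 = Rabs b ^ 2) by (unfold Rabs; destruct Rcase_abs; ring).
  assert (c^2 = Rabs c ^ 2) by (unfold Rabs; destruct Rcase_abs; ring).
  rewrite H0, H1, H2. pose proof (Rabs_pos a); pose proof (Rabs_pos b); pose proof (Rabs_pos c). nra.
Qed.

Lemma V_bound_coords l p K : posoct l -> 0 <= K ->
  Rabs (vx p) <= K -> Rabs (vy p) <= K -> Rabs (vz p) <= K ->
  V l p <= vz l * K^2 + vx l * K^2 + vx l * (K + 2 * vz l)^2.
Proof.
  intros [H1 [H2 H3]] HK a b c. unfold V.
  assert (vx p ^ 2 <= K^2) by (rewrite <- (pow2_abs (vx p)); apply pow_incr; split; [apply Rabs_pos|exact a]).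
  assert (vy p ^ 2 <= K^2) by (rewrite <- (pow2_abs (vy p)); apply pow_incr; split; [apply Rabs_pos|exact b]).
  assert ((vz p - 2 * vz l) ^ 2 <= (K + 2 * vz l)^2).
  { rewrite <- (pow2_abs (vz p - 2 * vz l)). apply pow_incr. split. apply Rabs_pos.
    eapply Rle_trans. apply Rabs_triang. rewrite Rabs_Ropp, Rabs_mult, (Rabs_right 2), (Rabs_right (vz l)) by lra. lra. }
  assert (vz l * vx p ^ 2 <= vz l * K^2) by (apply Rmult_le_compat_l; lra).
  assert (vx l * vy p ^ 2 <= vx l * K^2) by (apply Rmult_le_compat_l; lra).
  assert (vx l * (vz p - 2 * vz l) ^ 2 <= vx l * (K + 2 * vz l)^2) by (apply Rmult_le_compat_l; lra).
  lra.
Qed.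

Lemma WbM_pos m M : 0 < m -> m <= M -> 0 < WbM m M.
Proof.
  intros Hm HM. unfold WbM, C0.
  assert (0 < M^3) by (apply pow_lt; lra).
  assert (0 <= 2 * M / m) by (apply Rdiv_le_0_compat; lra).
  assert (0 < 1 / (2 * m)) by (apply Rdiv_lt_0_compat; lra).
  assert (0 < (1 + M + 2 * M / m) * (M ^ 3 + 1 / (2 * m))) by (apply Rmult_lt_0_compat; lra).
  lra.
Qed.

Lemma att_bound m M l A : 0 < m -> inbox m M l -> posoct l -> is_global_attractor l A ->
  forall a, A a -> V l a <= WbM m M.
Proof.
  intros Hm Hb Hl [[_ [Mb HMb]] [Hinv _]] a Ha.
  assert (HmM : m <= M) by (destruct Hb as [[h1 h2] _]; lra).
  assert (HMb0 : 0 <= Mb) by (specialize (HMb a Ha); unfold edist in HMb; pose proof (sqrt_pos ((vx a - vx (0,0,0))^2 + (vy a - vy (0,0,0))^2 + (vz a - vz (0,0,0))^2)); lra).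
  set (S := vz l * Mb^2 + vx l * Mb^2 + vx l * (Mb + 2 * vz l)^2).
  assert (HS : forall x, A x -> V l x <= S).
  { intros x Hx. specialize (HMb x Hx). destruct (edist_coord x (0,0,0)) as [c1 [c2 c3]].
    cbn [vx vy vz fst snd] in c1, c2, c3. rewrite Rminus_0_r in c1, c2, c3.
    apply V_bound_coords; try assumption; lra. }
  assert (HS0 : 0 <= S) by (eapply Rle_trans; [apply (V_nonneg l a Hl)|apply HS, Ha]).
  destruct (proj1 (Hinv (S + 1) ltac:(lra) a) Ha) as [x [Hx [u [Hu [Hu0 Hut]]]]].
  assert (D := sol_decay m M l u Hm Hb Hu (S + 1) ltac:(lra)). rewrite Hut, Hu0 in D.
  specialize (HS x Hx). pose proof (WbM_pos m M Hm HmM).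
  eapply Rle_trans; [exact D|]. apply Rmax_lub; lra.
Qed.

Definition esq (p q : vec) := (vx p - vx q)^2 + (vy p - vy q)^2 + (vz p - vz q)^2.

Lemma two_ab a b : 2 * a * b <= a^2 + b^2.
Proof. assert (0 <= (a-b)^2) by apply pow2_ge_0. replace ((a-b)^2) with (a^2 + b^2 - 2*a*b) in H by ring. lra. Qed.

Lemma two_kab k K a b : Rabs k <= K -> 2 * k * a * b <= K * (a^2 + b^2).
Proof.
  intros Hk. assert (2 * k * a * b <= Rabs k * (a^2 + b^2)).
  { pose proof (two_ab a b). pose proof (two_ab (-a) b). pose proof (Rabs_pos k).
    unfold Rabs in *; destruct Rcase_abs.
    - assert (- k * (2 * - a * b) <= - k * (a^2 + b^2)) by (apply Rmult_le_compat_l; [lra|replace ((-a)^2) with (a^2) in H0 by ring; lra]). nra.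
    - assert (k * (2 * a * b) <= k * (a^2 + b^2)) by (apply Rmult_le_compat_l; lra). nra. }
  assert (Rabs k * (a^2 + b^2) <= K * (a^2 + b^2)) by (apply Rmult_le_compat_r; [pose proof (pow2_ge_0 a); pose proof (pow2_ge_0 b); lra|lra]). lra.
Qed.

Lemma sq_bound d w R : Rabs w <= R -> (d * w)^2 <= R^2 * d^2.
Proof.
  intros H. replace ((d * w)^2) with (d^2 * w^2) by ring.
  assert (w^2 <= R^2). { rewrite <- (pow2_abs w). apply pow_incr. split; [apply Rabs_pos|exact H]. }
  assert (0 <= d^2) by apply pow2_ge_0. nra.
Qed.

Lemma edot_bound l mu p q R M : 0 <= R -> 0 <= vx l <= M -> 0 <= vy l <= M -> 0 <= vz l <= M ->
  Rabs (vx q) <= R -> Rabs (vy q) <= R -> Rabs (vz q) <= R -> Rabs (vy p) <= R -> Rabs (vz p) <= R ->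
  2 * (vx p - vx q) * (F1 l p - F1 mu q) + 2 * (vy p - vy q) * (F2 l p - F2 mu q) + 2 * (vz p - vz q) * (F3 l p - F3 mu q)
  <= (2 * M + 4 * R + 3) * esq p q + 4 * R^2 * esq l mu.
Proof.
  intros HR [s1 s2] [b1 b2] [r1 r2] Hqx Hqy Hqz Hpy Hpz. unfold F1, F2, F3, esq.
  pose (a := vx p - vx q). pose (b := vy p - vy q). pose (c := vz p - vz q).
  pose (ds := vx l - vx mu). pose (db := vy l - vy mu). pose (dr := vz l - vz mu).
  match goal with |- ?L <= _ => assert (E : L =
    2 * vx l * a * b - 2 * vx l * a^2 + 2 * a * (ds * (vy q - vx q))
    + 2 * vz l * a * b + 2 * b * (dr * vx q) - 2 * b^2 + 2 * (- vz p) * a * b + 2 * (- vx q) * b * c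
    - 2 * vy l * c^2 + 2 * c * (- db * vz q) + 2 * (vy p) * c * a + 2 * (vx q) * c * b) end.
  { unfold a, b, c, ds, db, dr. ring. }
  match goal with |- _ <= ?Rr => assert (E2 : Rr = (2 * M + 4 * R + 3) * (a^2 + b^2 + c^2) + 4 * R^2 * (ds^2 + db^2 + dr^2)) end.
  { unfold a, b, c, ds, db, dr. reflexivity. }
  rewrite E, E2.
  assert (T1 := two_kab (vx l) M a b ltac:(rewrite Rabs_right; lra)).
  assert (T2 : 0 <= 2 * vx l * a^2) by (assert (0 <= a^2) by apply pow2_ge_0; nra).
  assert (T3 : 2 * a * (ds * (vy q - vx q)) <= a^2 + (2 * R)^2 * ds^2).
  { eapply Rle_trans. apply (two_ab a). apply Rplus_le_compat_l. apply sq_bound.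
    eapply Rle_trans. apply Rabs_triang. rewrite Rabs_Ropp. lra. }
  assert (T4 := two_kab (vz l) M a b ltac:(rewrite Rabs_right; lra)).
  assert (T5 : 2 * b * (dr * vx q) <= b^2 + R^2 * dr^2).
  { eapply Rle_trans. apply (two_ab b). apply Rplus_le_compat_l. apply sq_bound. exact Hqx. }
  assert (T6 : 0 <= 2 * b^2) by (assert (0 <= b^2) by apply pow2_ge_0; nra).
  assert (T7 := two_kab (- vz p) R a b ltac:(rewrite Rabs_Ropp; lra)).
  assert (T8 := two_kab (- vx q) R b c ltac:(rewrite Rabs_Ropp; lra)).
  assert (T9 : 0 <= 2 * vy l * c^2) by (assert (0 <= c^2) by apply pow2_ge_0; nra).
  assert (T10 : 2 * c * (- db * vz q) <= c^2 + R^2 * db^2).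
  { eapply Rle_trans. apply (two_ab c). apply Rplus_le_compat_l.
    replace (- db * vz q) with (db * (- vz q)) by ring. apply sq_bound. rewrite Rabs_Ropp. exact Hqz. }
  assert (T11 := two_kab (vy p) R c a Hpy).
  assert (T12 := two_kab (vx q) R c b Hqx).
  assert (0 <= a^2) by apply pow2_ge_0. assert (0 <= b^2) by apply pow2_ge_0. assert (0 <= c^2) by apply pow2_ge_0.
  assert (0 <= ds^2) by apply pow2_ge_0. assert (0 <= db^2) by apply pow2_ge_0. assert (0 <= dr^2) by apply pow2_ge_0.
  assert (0 <= R^2) by apply pow2_ge_0.
  assert (R^2 * db^2 <= 4 * R^2 * db^2) by nra. assert (R^2 * dr^2 <= 4 * R^2 * dr^2) by nra.
  replace ((2 * R)^2 * ds^2) with (4 * R^2 * ds^2) in T3 by ring.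
  assert (K1 : 0 <= M) by lra.
  nra.
Qed.

Lemma sqdiff_chain (f g : R -> R) t a b : derivable_pt_lim f t a -> derivable_pt_lim g t b ->
  derivable_pt_lim (fun s => (f s - g s)^2) t (2 * (f t - g t) * (a - b)).
Proof.
  intros Ha Hb. replace (2 * (f t - g t) * (a - b)) with (INR 2 * (f t - g t)^1 * (a - b)) by (simpl; ring).
  apply (derivable_pt_lim_comp (fun s => f s - g s) (fun y => y^2)).
  apply (derivable_pt_lim_minus f g); assumption. apply derivable_pt_lim_pow.
Qed.

Lemma esq_chain (p q : R -> vec) t a1 a2 a3 b1 b2 b3 :
  is_derive (fun s => vx (p s)) t a1 -> is_derive (fun s => vy (p s)) t a2 -> is_derive (fun s => vz (p s)) t a3 ->
  is_derive (fun s => vx (q s)) t b1 -> is_derive (fun s => vy (q s)) t b2 -> is_derive (fun s => vz (q s)) t b3 ->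
  is_derive (fun s => esq (p s) (q s)) t
    (2 * (vx (p t) - vx (q t)) * (a1 - b1) + 2 * (vy (p t) - vy (q t)) * (a2 - b2) + 2 * (vz (p t) - vz (q t)) * (a3 - b3)).
Proof.
  intros. apply is_derive_Reals in H, H0, H1, H2, H3, H4. apply is_derive_Reals. unfold esq.
  apply (derivable_pt_lim_plus (fun s => (vx (p s) - vx (q s))^2 + (vy (p s) - vy (q s))^2) (fun s => (vz (p s) - vz (q s))^2)).
  apply (derivable_pt_lim_plus (fun s => (vx (p s) - vx (q s))^2) (fun s => (vy (p s) - vy (q s))^2)).
  all: apply sqdiff_chain; assumption.
Qed.

Lemma sqdiff_cont (f g : R -> R) t : continuity_pt f t -> continuity_pt g t -> continuity_pt (fun s => (f s - g s)^2) t.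
Proof.
  intros. apply (continuity_pt_comp (fun s => f s - g s) (fun y => y^2)).
  apply (continuity_pt_minus f g); assumption. apply derivable_continuous_pt, derivable_pt_pow.
Qed.

Lemma esq_cont (p q : R -> vec) t :
  continuity_pt (fun s => vx (p s)) t -> continuity_pt (fun s => vy (p s)) t -> continuity_pt (fun s => vz (p s)) t ->
  continuity_pt (fun s => vx (q s)) t -> continuity_pt (fun s => vy (q s)) t -> continuity_pt (fun s => vz (q s)) t ->
  continuity_pt (fun s => esq (p s) (q s)) t.
Proof.
  intros. unfold esq.
  apply (continuity_pt_plus (fun s => (vx (p s) - vx (q s))^2 + (vy (p s) - vy (q s))^2) (fun s => (vz (p s) - vz (q s))^2)).
  apply (continuity_pt_plus (fun s => (vx (p s) - vx (q s))^2) (fun s => (vy (p s) - vy (q s))^2)).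
  all: apply sqdiff_cont; assumption.
Qed.

Lemma compare l mu u v R M : 0 <= R -> 0 <= vx l <= M -> 0 <= vy l <= M -> 0 <= vz l <= M ->
  lorenz_solution l u -> lorenz_solution mu v -> u 0 = v 0 ->
  (forall t, 0 <= t -> Rabs (vx (v t)) <= R /\ Rabs (vy (v t)) <= R /\ Rabs (vz (v t)) <= R /\
                       Rabs (vy (u t)) <= R /\ Rabs (vz (u t)) <= R) ->
  forall t, 0 <= t -> esq (u t) (v t) <= 4 * R^2 * esq l mu / (2 * M + 4 * R + 3) * (exp ((2 * M + 4 * R + 3) * t) - 1).
Proof.
  intros HR Hs Hb Hr Hu Hv H0 Hbd t Ht.
  destruct (sol_ext l u Hu) as [Du Cu]. destruct (sol_ext mu v Hv) as [Dv Cv].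
  rewrite <- (ue_eq u t Ht), <- (ue_eq v t Ht).
  set (dg := fun s => 2 * (vx (ue u s) - vx (ue v s)) * (F1 l (ue u s) - F1 mu (ue v s))
     + 2 * (vy (ue u s) - vy (ue v s)) * (F2 l (ue u s) - F2 mu (ue v s))
     + 2 * (vz (ue u s) - vz (ue v s)) * (F3 l (ue u s) - F3 mu (ue v s))).
  apply (gronwall (fun s => esq (ue u s) (ue v s)) dg); [| |intros s Hs'; split| | |exact Ht].
  - pose proof (Rabs_pos (vx l)). destruct Hs. lra.
  - assert (0 <= esq l mu) by (unfold esq; pose proof (pow2_ge_0 (vx l - vx mu)); pose proof (pow2_ge_0 (vy l - vy mu)); pose proof (pow2_ge_0 (vz l - vz mu)); lra).
    pose proof (pow2_ge_0 R). nra.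
  - destruct (Du s Hs') as [a1 [a2 a3]]. destruct (Dv s Hs') as [b1 [b2 b3]]. apply esq_chain; assumption.
  - unfold dg. rewrite !ue_eq by lra. destruct (Hbd s ltac:(lra)) as [c1 [c2 [c3 [c4 c5]]]].
    apply edot_bound; assumption.
  - destruct (Cu 0 (Rle_refl 0)) as [a1 [a2 a3]]. destruct (Cv 0 (Rle_refl 0)) as [b1 [b2 b3]]. apply esq_cont; assumption.
  - rewrite !ue_eq by lra. rewrite H0. unfold esq. rewrite !Rminus_diag. ring.
Qed.

Lemma edist_esq p q : edist p q = sqrt (esq p q).
Proof. reflexivity. Qed.

Lemma esq_nonneg p q : 0 <= esq p q.
Proof. unfold esq. pose proof (pow2_ge_0 (vx p - vx q)); pose proof (pow2_ge_0 (vy p - vy q)); pose proof (pow2_ge_0 (vz p - vz q)); lra. Qed.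

Lemma edist_pos p q : 0 <= edist p q.
Proof. apply sqrt_pos. Qed.

Lemma edist_sq p q : (edist p q)^2 = esq p q.
Proof. rewrite edist_esq. simpl. rewrite Rmult_1_r. apply sqrt_sqrt, esq_nonneg. Qed.

Lemma edist_sym p q : edist p q = edist q p.
Proof. unfold edist. f_equal. ring. Qed.

Lemma edist_tri p q r : edist p r <= edist p q + edist q r.
Proof.
  pose proof (edist_pos p q). pose proof (edist_pos q r). pose proof (edist_pos p r).
  apply Rsqr_incr_0_var; [|lra]. unfold Rsqr.
  assert (Hpr := edist_sq p r). assert (Hpq := edist_sq p q). assert (Hqr := edist_sq q r). simpl in Hpr, Hpq, Hqr.
  rewrite Rmult_1_r in Hpr, Hpq, Hqr. rewrite Hpr.
  unfold esq in *.
  set (a1 := vx p - vx q) in *. set (a2 := vy p - vy q) in *. set (a3 := vz p - vz q) in *.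
  set (b1 := vx q - vx r) in *. set (b2 := vy q - vy r) in *. set (b3 := vz q - vz r) in *.
  replace (vx p - vx r) with (a1 + b1) by (unfold a1, b1; ring).
  replace (vy p - vy r) with (a2 + b2) by (unfold a2, b2; ring).
  replace (vz p - vz r) with (a3 + b3) by (unfold a3, b3; ring).
  set (d1 := edist p q) in *. set (d2 := edist q r) in *.
  assert (CS : a1 * b1 + a2 * b2 + a3 * b3 <= d1 * d2).
  { destruct (Rle_dec (a1 * b1 + a2 * b2 + a3 * b3) 0) as [h|h]. nra.
    apply Rsqr_incr_0_var; [|nra]. unfold Rsqr.
    replace (d1 * d2 * (d1 * d2)) with ((d1 * d1) * (d2 * d2)) by ring. rewrite Hpq, Hqr.
    assert (0 <= (a1*b2 - a2*b1)^2 + (a1*b3 - a3*b1)^2 + (a2*b3-a3*b2)^2) by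
      (pose proof (pow2_ge_0 (a1*b2 - a2*b1)); pose proof (pow2_ge_0 (a1*b3 - a3*b1)); pose proof (pow2_ge_0 (a2*b3-a3*b2)); lra).
    nra. }
  simpl. nra.
Qed.

Lemma usc (Att : vec -> vec -> Prop) : (forall l, posoct l -> is_global_attractor l (Att l)) ->
  forall l0, posoct l0 -> forall eps, 0 < eps -> exists delta, 0 < delta /\
    forall mu, posoct mu -> edist mu l0 < delta -> forall a, Att mu a -> exists b, Att l0 b /\ edist a b < eps.
Proof.
  intros HA l0 Hl0 eps Heps.
  destruct (inbox_of l0 Hl0) as [Hb0 Hm0].
  set (m := Rmin (vx l0) (Rmin (vy l0) (vz l0)) / 2).
  set (M := Rmax (vx l0) (Rmax (vy l0) (vz l0)) + m).
  assert (Hm : 0 < m) by (unfold m; lra).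
  assert (Hnear : forall mu, edist mu l0 < m -> inbox m M mu).
  { intros mu Hd. destruct (edist_coord mu l0) as [c1 [c2 c3]].
    assert (e1 : Rabs (vx mu - vx l0) < m) by lra. assert (e2 : Rabs (vy mu - vy l0) < m) by lra.
    assert (e3 : Rabs (vz mu - vz l0) < m) by lra.
    apply Rabs_lt_between' in e1. apply Rabs_lt_between' in e2. apply Rabs_lt_between' in e3.
    assert (h1 : Rmin (vx l0) (Rmin (vy l0) (vz l0)) <= vx l0) by apply Rmin_l.
    assert (h2 : Rmin (vx l0) (Rmin (vy l0) (vz l0)) <= vy l0) by (eapply Rle_trans; [apply Rmin_r|apply Rmin_l]).
    assert (h3 : Rmin (vx l0) (Rmin (vy l0) (vz l0)) <= vz l0) by (eapply Rle_trans; [apply Rmin_r|apply Rmin_r]).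
    assert (k1 : vx l0 <= Rmax (vx l0) (Rmax (vy l0) (vz l0))) by apply Rmax_l.
    assert (k2 : vy l0 <= Rmax (vx l0) (Rmax (vy l0) (vz l0))) by (eapply Rle_trans; [|apply Rmax_r]; apply Rmax_l).
    assert (k3 : vz l0 <= Rmax (vx l0) (Rmax (vy l0) (vz l0))) by (eapply Rle_trans; [|apply Rmax_r]; apply Rmax_r).
    unfold inbox, M, m in *. repeat split; lra. }
  assert (Hbox0 : inbox m M l0).
  { apply Hnear. unfold edist. rewrite !Rminus_diag. simpl. rewrite !Rmult_0_l, !Rplus_0_l, sqrt_0. lra. }
  assert (HmM : m <= M) by (destruct Hbox0 as [[h1 h2] _]; lra).
  set (Wb := WbM m M). set (R1 := Rb m M Wb).
  assert (HWb : 0 < Wb) by (apply WbM_pos; lra).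
  assert (HR1 : 0 <= R1) by (unfold R1, Rb; assert (0 <= Wb / m) by (apply Rdiv_le_0_compat; lra); lra).
  set (W2 := vz l0 * R1^2 + vx l0 * R1^2 + vx l0 * (R1 + 2 * vz l0)^2).
  set (W3 := Rmax Wb W2). set (R2 := Rb m M W3).
  assert (HR12 : R1 <= R2).
  { unfold R1, R2, Rb. assert (Wb / m <= W3 / m). { unfold Rdiv. apply Rmult_le_compat_r. left; apply Rinv_0_lt_compat; lra. apply Rmax_l. } lra. }
  set (B := fun x : vec => Rabs (vx x) <= R1 /\ Rabs (vy x) <= R1 /\ Rabs (vz x) <= R1).
  assert (HB : bounded3 B).
  { exists (3 * R1). intros p [c1 [c2 c3]]. eapply Rle_trans. apply edist_le_sum. cbn [vx vy vz fst snd]. rewrite !Rminus_0_r. lra. }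
  destruct (HA l0 Hl0) as [_ [_ Hatt]].
  destruct (Hatt B HB (eps / 2) ltac:(lra)) as [T HT].
  set (t := Rmax T 0).
  assert (Ht0 : 0 <= t) by apply Rmax_r. assert (HtT : T <= t) by apply Rmax_l.
  set (K := 2 * M + 4 * R2 + 3).
  assert (HK : 0 < K) by (unfold K; lra).
  set (Q := 4 * R2^2 / K * (exp (K * t) - 1)).
  assert (HQ : 0 <= Q).
  { unfold Q. apply Rmult_le_pos. apply Rdiv_le_0_compat; [pose proof (pow2_ge_0 R2); lra|lra].
    assert (1 <= exp (K * t)). { rewrite <- exp_0. assert (Hkt : 0 <= K * t) by (apply Rmult_le_pos; lra). destruct Hkt as [Hkt|Hkt]; [left; apply exp_increasing; exact Hkt|rewrite <- Hkt; lra]. } lra. }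
  set (delta := Rmin m (Rmin 1 ((eps/2)^2 / (Q + 1)))).
  assert (Hd1 : 0 < (eps/2)^2 / (Q + 1)) by (apply Rdiv_lt_0_compat; [apply pow_lt; lra|lra]).
  exists delta. split. { unfold delta. repeat apply Rmin_glb_lt; lra. }
  intros mu Hmu Hdmu a Ha.
  assert (Hdm : edist mu l0 < m) by (eapply Rlt_le_trans; [exact Hdmu|apply Rmin_l]).
  assert (Hd_1 : edist mu l0 < 1) by (eapply Rlt_le_trans; [exact Hdmu|eapply Rle_trans; [apply Rmin_r|apply Rmin_l]]).
  assert (Hd_q : edist mu l0 < (eps/2)^2 / (Q + 1)) by (eapply Rlt_le_trans; [exact Hdmu|eapply Rle_trans; [apply Rmin_r|apply Rmin_r]]).
  assert (Hboxmu := Hnear mu Hdm).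
  destruct (HA mu Hmu) as [_ [Hinvmu _]].
  destruct (proj1 (Hinvmu t Ht0 a) Ha) as [x [Hx [u [Hu [Hu0 Hut]]]]].
  assert (HxV : V mu x <= Wb) by (apply (att_bound m M mu (Att mu)); auto).
  destruct (V_coords m M mu x Wb Hm Hboxmu HxV) as [x1 [x2 x3]]. fold R1 in x1, x2, x3.
  destruct (lorenz_exists l0 x Hl0) as [v [Hv Hv0]].
  destruct (HT t HtT x (v t) (conj x1 (conj x2 x3)) (ex_intro _ v (conj Hv (conj Hv0 eq_refl)))) as [b [Hb Hyb]].
  exists b. split; [exact Hb|].
  assert (Hvb : forall s, 0 <= s -> Rabs (vx (v s)) <= R2 /\ Rabs (vy (v s)) <= R2 /\ Rabs (vz (v s)) <= R2).
  { intros s Hs. apply (V_coords m M l0); [exact Hm|exact Hbox0|].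
    eapply Rle_trans. apply (sol_decay m M l0 v Hm Hbox0 Hv s Hs). apply Rmax_lub. apply Rmax_l.
    rewrite Hv0. assert (V l0 x <= W2) by (apply V_bound_coords; auto). unfold W3. eapply Rle_trans; [|apply Rmax_r]. lra. }
  assert (Hub : forall s, 0 <= s -> Rabs (vx (u s)) <= R2 /\ Rabs (vy (u s)) <= R2 /\ Rabs (vz (u s)) <= R2).
  { intros s Hs. destruct (V_coords m M mu (u s) Wb Hm Hboxmu) as [y1 [y2 y3]].
    eapply Rle_trans. apply (sol_decay m M mu u Hm Hboxmu Hu s Hs). apply Rmax_lub; [unfold Wb; lra|]. rewrite Hu0. unfold Wb in *; lra.
    fold R1 in y1, y2, y3. lra. }
  destruct Hboxmu as [[s1 s2] [[b1 b2] [r1 r2]]].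
  assert (Hcmp := compare mu l0 u v R2 M ltac:(lra) ltac:(lra) ltac:(lra) ltac:(lra) Hu Hv ltac:(rewrite Hu0, Hv0; reflexivity)).
  assert (Hc := Hcmp ltac:(intros s Hs; destruct (Hvb s Hs) as [p1 [p2 p3]]; destruct (Hub s Hs) as [q1 [q2 q3]]; tauto) t Ht0).
  fold K in Hc. rewrite Hut in Hc.
  assert (Hesq : esq a (v t) <= Q * esq mu l0).
  { eapply Rle_trans; [exact Hc|]. right. unfold Q. field. lra. }
  assert (Hmu_sq : esq mu l0 < (eps/2)^2 / (Q + 1)).
  { rewrite <- edist_sq. pose proof (edist_pos mu l0). simpl. rewrite Rmult_1_r. nra. }
  assert (Hlt : esq a (v t) < (eps/2)^2).
  { assert (Q * esq mu l0 <= Q * ((eps/2)^2 / (Q + 1))) by (apply Rmult_le_compat_l; lra).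
    assert (Q * ((eps/2)^2 / (Q + 1)) < (eps/2)^2).
    { replace (Q * ((eps/2)^2 / (Q + 1))) with ((eps/2)^2 * (Q / (Q + 1))) by (field; lra).
      assert (Q / (Q + 1) < 1) by (apply Rmult_lt_reg_r with (Q + 1); [lra|]; unfold Rdiv; rewrite Rmult_assoc, Rinv_l; lra).
      assert (0 < (eps/2)^2) by (apply pow_lt; lra). nra. }
    lra. }
  assert (Hay : edist a (v t) < eps / 2).
  { rewrite edist_esq. rewrite <- (sqrt_pow2 (eps/2)) by lra. apply sqrt_lt_1_alt. split; [apply esq_nonneg|exact Hlt]. }
  pose proof (edist_tri a (v t) b). lra.
Qed.

Definition Eset (Att : vec -> vec -> Prop) (q : vec) (c : R) (mu : vec) : Prop :=
  posoct mu /\ forall eta, 0 < eta -> exists b, Att mu b /\ edist q b < c + eta.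

Definition Nset (Att : vec -> vec -> Prop) (q : vec) (c : R) (mu : vec) : Prop :=
  Eset Att q c mu /\ ~ (exists d, 0 < d /\ forall z, posoct z -> edist mu z < d -> Eset Att q c z).

Lemma Eset_closed Att : (forall l, posoct l -> is_global_attractor l (Att l)) ->
  forall q c z, posoct z -> ~ Eset Att q c z ->
  exists d, 0 < d /\ forall w, posoct w -> edist z w < d -> ~ Eset Att q c w.
Proof.
  intros HA q c z Hz HnE.
  assert (Hex : exists eta, 0 < eta /\ forall b, Att z b -> c + eta <= edist q b).
  { apply NNPP. intros Hn. apply HnE. split; [exact Hz|]. intros eta Heta.
    apply NNPP. intros Hn2. apply Hn. exists eta. split; [exact Heta|]. intros b Hb.
    apply Rnot_lt_le. intros Hlt. apply Hn2. exists b. split; assumption. }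
  destruct Hex as [eta [Heta Hb]].
  destruct (usc Att HA z Hz (eta / 2) ltac:(lra)) as [d [Hd Hu]].
  exists d. split; [exact Hd|]. intros w Hw Hzw [_ HE].
  destruct (HE (eta / 2) ltac:(lra)) as [a [Ha Hqa]].
  rewrite edist_sym in Hzw.
  destruct (Hu w Hw Hzw a Ha) as [b [Hbz Hab]].
  specialize (Hb b Hbz). pose proof (edist_tri q a b). lra.
Qed.

Lemma Nset_nowhere Att : (forall l, posoct l -> is_global_attractor l (Att l)) ->
  forall q c, nowhere_dense_in posoct (Nset Att q c).
Proof.
  intros HA q c p Hp eps Heps.
  destruct (classic (exists z, posoct z /\ edist p z < eps / 2 /\ ~ Eset Att q c z)) as [[z [Hz [Hpz HnE]]]|Hall].
  - destruct (Eset_closed Att HA q c z Hz HnE) as [d [Hd Hcl]].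
    exists z, (Rmin d (eps / 2)). split; [exact Hz|]. split; [apply Rmin_glb_lt; lra|]. split.
    + intros w Hw Hzw. pose proof (edist_tri p z w). pose proof (Rmin_r d (eps/2)). lra.
    + intros w Hw Hzw [HE _]. apply (Hcl w Hw); [|exact HE]. eapply Rlt_le_trans; [exact Hzw|apply Rmin_l].
  - exists p, (eps / 2). split; [exact Hp|]. split; [lra|]. split.
    + intros w _ Hw. lra.
    + intros w Hw Hpw [_ Hint]. apply Hint. exists (eps / 2 - edist p w). split; [lra|].
      intros z Hz Hwz. apply NNPP. intros HnE. apply Hall. exists z. split; [exact Hz|]. split; [|exact HnE].
      pose proof (edist_tri p w z). lra.
Qed.

Lemma fin_min (P : nat -> R -> Prop) N :
  (forall i d d', 0 < d' <= d -> P i d -> P i d') ->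
  (forall i, (i < N)%nat -> exists d, 0 < d /\ P i d) ->
  exists d, 0 < d /\ forall i, (i < N)%nat -> P i d.
Proof.
  intros Hmono. induction N as [|N IH]; intros H.
  - exists 1. split; [lra|]. intros i Hi. lia.
  - destruct IH as [d1 [Hd1 H1]]. { intros i Hi. apply H. lia. }
    destruct (H N ltac:(lia)) as [d2 [Hd2 H2]].
    exists (Rmin d1 d2). split; [apply Rmin_glb_lt; lra|]. intros i Hi.
    assert (0 < Rmin d1 d2) by (apply Rmin_glb_lt; lra).
    destruct (Nat.eq_dec i N) as [->|Hne].
    + apply (Hmono N d2). split; [lra|apply Rmin_r]. exact H2.
    + apply (Hmono i d1). split; [lra|apply Rmin_l]. apply H1. lia.
Qed.

Lemma excess_le (A C : vec -> Prop) r : (forall a, A a -> exists c, C c /\ edist a c < r) ->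
  Rbar_le (excess A C) (Finite r).
Proof.
  intros H. unfold excess. destruct (Lub_Rbar_correct (fun s => exists a, A a /\ Finite s = point_set_dist a C)) as [_ Hl].
  apply Hl. intros s [a [Ha Hs]]. destruct (H a Ha) as [c [Hc Hac]].
  unfold point_set_dist in Hs. destruct (Glb_Rbar_correct (fun s => exists c, C c /\ s = edist a c)) as [Hg _].
  specialize (Hg (edist a c) (ex_intro _ c (conj Hc eq_refl))). rewrite <- Hs in Hg. simpl in Hg. simpl. lra.
Qed.

Lemma hausdorff_lt (A C : vec -> Prop) r eps : r < eps ->
  (forall a, A a -> exists c, C c /\ edist a c < r) ->
  (forall c, C c -> exists a, A a /\ edist c a < r) ->
  Rbar_lt (hausdorff_dist A C) (Finite eps).
Proof.
  intros Hr H1 H2. assert (E1 := excess_le A C r H1). assert (E2 := excess_le C A r H2).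
  unfold hausdorff_dist. destruct (Rbar_lt_dec (excess A C) (excess C A)).
  - eapply Rbar_le_lt_trans. exact E2. simpl. exact Hr.
  - eapply Rbar_le_lt_trans. exact E1. simpl. exact Hr.
Qed.

Definition mincoord (c : vec) := Rmin (vx c) (Rmin (vy c) (vz c)).

Lemma mincoord_pos c : posoct c -> 0 < mincoord c.
Proof. intros [a [b d]]. unfold mincoord. repeat apply Rmin_glb_lt; lra. Qed.

Lemma ball_posoct c z : posoct c -> edist c z < mincoord c -> posoct z.
Proof.
  intros Hc Hd. destruct (edist_coord c z) as [e1 [e2 e3]]. unfold mincoord in Hd.
  assert (h1 : Rmin (vx c) (Rmin (vy c) (vz c)) <= vx c) by apply Rmin_l.
  assert (h2 : Rmin (vx c) (Rmin (vy c) (vz c)) <= vy c) by (eapply Rle_trans; [apply Rmin_r|apply Rmin_l]).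
  assert (h3 : Rmin (vx c) (Rmin (vy c) (vz c)) <= vz c) by (eapply Rle_trans; [apply Rmin_r|apply Rmin_r]).
  assert (f1 := Rle_abs (vx c - vx z)). assert (f2 := Rle_abs (vy c - vy z)). assert (f3 := Rle_abs (vz c - vz z)).
  unfold posoct. lra.
Qed.

Definition Good (N : nat -> vec -> Prop) (n : nat) (s s' : vec * R) : Prop :=
  (posoct (fst s) /\ 0 < snd s) ->
  (posoct (fst s') /\ 0 < snd s' /\ snd s' <= snd s / 2 /\
   forall z, edist (fst s') z <= snd s' -> posoct z /\ edist (fst s) z < snd s /\ ~ N n z).

Lemma exGood N : (forall n, nowhere_dense_in posoct (N n)) -> forall n s, exists s', Good N n s s'.
Proof.
  intros HN n [c r]. destruct (classic (posoct c /\ 0 < r)) as [[Hc Hr]|Hn].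
  - destruct (HN n c Hc r Hr) as [q [d [Hq [Hd [H1 H2]]]]].
    pose proof (mincoord_pos q Hq).
    set (r' := Rmin (d / 2) (Rmin (r / 2) (mincoord q / 2))).
    assert (Hr'1 : r' <= d / 2) by apply Rmin_l.
    assert (Hr'2 : r' <= r / 2) by (eapply Rle_trans; [apply Rmin_r|apply Rmin_l]).
    assert (Hr'3 : r' <= mincoord q / 2) by (eapply Rle_trans; [apply Rmin_r|apply Rmin_r]).
    assert (Hr'0 : 0 < r') by (unfold r'; repeat apply Rmin_glb_lt; lra).
    exists (q, r'). intros _. simpl. split; [exact Hq|]. split; [exact Hr'0|]. split; [exact Hr'2|].
    intros z Hz. assert (Hzp : posoct z) by (apply (ball_posoct q); [exact Hq|lra]).
    split; [exact Hzp|]. split. apply H1; [exact Hzp|lra]. apply H2; [exact Hzp|lra].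
  - exists (c, r). intros H. exfalso. apply Hn. exact H.
Qed.

Lemma INR_le_pow2 n : INR n <= 2 ^ n.
Proof. induction n. simpl; lra. rewrite S_INR. simpl. assert (1 <= 2^n) by (apply pow_R1_Rle; lra). lra. Qed.

Lemma small_pow r0 e : 0 < e -> exists N, r0 / 2 ^ N < e.
Proof.
  intros He. destruct (archimed (r0 / e)) as [H1 _].
  set (N := Z.to_nat (up (r0 / e))). exists N.
  assert (HN : r0 / e < INR N).
  { unfold N. destruct (Z_lt_le_dec (up (r0/e)) 0) as [h|h].
    - assert (0 <= INR (Z.to_nat (up (r0 / e)))) by apply pos_INR. apply IZR_lt in h. simpl in h. lra.
    - rewrite INR_IZR_INZ, Z2Nat.id by exact h. exact H1. }
  assert (0 < 2 ^ N) by (apply pow_lt; lra).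
  pose proof (INR_le_pow2 N).
  apply Rmult_lt_reg_r with (2 ^ N); [lra|]. unfold Rdiv. rewrite Rmult_assoc, Rinv_l by lra.
  assert (r0 < e * INR N). { apply Rmult_lt_reg_r with (/ e). apply Rinv_0_lt_compat; lra.
    replace (e * INR N * / e) with (INR N) by (field; lra). exact HN. }
  assert (e * INR N <= e * 2 ^ N) by (apply Rmult_le_compat_l; lra). lra.
Qed.

Lemma baire (N : nat -> vec -> Prop) : (forall n, nowhere_dense_in posoct (N n)) ->
  forall p, posoct p -> forall eps, 0 < eps -> exists q, posoct q /\ (forall n, ~ N n q) /\ edist p q < eps.
Proof.
  intros HN p Hp eps Heps.
  set (step := fun n s => proj1_sig (constructive_indefinite_description _ (exGood N HN n s))).
  assert (Hstep : forall n s, Good N n s (step n s)) by (intros n s; unfold step; destruct constructive_indefinite_description; assumption).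
  set (r0 := Rmin (eps / 2) (mincoord p / 2)).
  assert (Hr0 : 0 < r0) by (unfold r0; pose proof (mincoord_pos p Hp); apply Rmin_glb_lt; lra).
  set (sq := fix sq (k : nat) : vec * R := match k with O => (p, r0) | S k => step k (sq k) end).
  assert (Hsq : forall k, sq (S k) = step k (sq k)) by reflexivity.
  assert (Inv : forall k, posoct (fst (sq k)) /\ 0 < snd (sq k) /\ snd (sq k) <= r0 / 2 ^ k).
  { induction k as [|k IH].
    - simpl. split; [exact Hp|]. split; [exact Hr0|]. lra.
    - rewrite Hsq. destruct (Hstep k (sq k) (conj (proj1 IH) (proj1 (proj2 IH)))) as [a [b [c _]]].
      split; [exact a|]. split; [exact b|]. simpl pow. destruct IH as [_ [_ IH]].
      replace (r0 / (2 * 2 ^ k)) with (r0 / 2 ^ k / 2) by (field; apply pow_nonzero; lra). lra. }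
  assert (Gk : forall k z, edist (fst (sq (S k))) z <= snd (sq (S k)) ->
             posoct z /\ edist (fst (sq k)) z < snd (sq k) /\ ~ N k z).
  { intros k z Hz. rewrite Hsq in Hz. destruct (Inv k) as [a [b _]].
    destruct (Hstep k (sq k) (conj a b)) as [_ [_ [_ H]]]. apply H. exact Hz. }
  assert (Nest : forall (k j : nat) z, edist (fst (sq (k + S j)%nat)) z <= snd (sq (k + S j)%nat) -> edist (fst (sq k)) z < snd (sq k)).
  { intros k j. induction j as [|j IH]; intros z Hz.
    - rewrite Nat.add_1_r in Hz. apply (Gk k z Hz).
    - apply IH. replace (k + S (S j))%nat with (S (k + S j)) in Hz by lia.
      left. apply (Gk (k + S j)%nat z Hz). }
  assert (Close : forall k j, (k <= j)%nat -> edist (fst (sq k)) (fst (sq j)) <= snd (sq k)).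
  { intros k j Hkj. destruct (Nat.eq_dec k j) as [->|Hne].
    - unfold edist. rewrite !Rminus_diag. simpl. rewrite !Rmult_0_l, !Rplus_0_l, sqrt_0. left; apply Inv.
    - left. replace j with (k + S (j - k - 1))%nat by lia. apply (Nest k (j - k - 1)%nat).
      unfold edist. rewrite !Rminus_diag. simpl. rewrite !Rmult_0_l, !Rplus_0_l, sqrt_0. left; apply Inv. }
  assert (Cau : forall pr : vec -> R, (forall a b, Rabs (pr a - pr b) <= edist a b) ->
     exists l, Un_cv (fun k => pr (fst (sq k))) l).
  { intros pr Hpr.
    assert (ex_lim_seq_cauchy (fun k => pr (fst (sq k)))).
    { intros e. destruct (small_pow r0 e (cond_pos e)) as [M HM]. exists M. intros n m Hn Hm.
      assert (forall a b, (M <= a)%nat -> (a <= b)%nat -> Rabs (pr (fst (sq a)) - pr (fst (sq b))) < e).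
      { intros a b Ha Hb. eapply Rle_lt_trans. apply Hpr. eapply Rle_lt_trans. apply Close, Hb.
        destruct (Inv a) as [_ [_ Ha']]. eapply Rle_lt_trans. exact Ha'.
        eapply Rle_lt_trans; [|exact HM]. unfold Rdiv. apply Rmult_le_compat_l; [lra|].
        apply Rinv_le_contravar. apply pow_lt; lra. apply Rle_pow; [lra|exact Ha]. }
      destruct (Nat.le_ge_cases n m). apply H; lia. rewrite Rabs_minus_sym. apply H; lia. }
    apply ex_lim_seq_cauchy_corr in H. destruct H as [l Hl]. exists l. apply is_lim_seq_Reals, Hl. }
  destruct (Cau vx (fun a b => proj1 (edist_coord a b))) as [lx Hlx].
  destruct (Cau vy (fun a b => proj1 (proj2 (edist_coord a b)))) as [ly Hly].
  destruct (Cau vz (fun a b => proj2 (proj2 (edist_coord a b)))) as [lz Hlz].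
  set (q := (lx, ly, lz) : vec).
  assert (Hq : forall k, edist (fst (sq k)) q <= snd (sq k)).
  { intros k. apply Rnot_lt_le. intros Hlt.
    set (eta := (edist (fst (sq k)) q - snd (sq k)) / 4).
    assert (Heta : 0 < eta) by (unfold eta; lra).
    destruct (Hlx eta Heta) as [N1 H1]. destruct (Hly eta Heta) as [N2 H2]. destruct (Hlz eta Heta) as [N3 H3].
    set (j := (k + N1 + N2 + N3)%nat).
    specialize (H1 j ltac:(unfold j; lia)). specialize (H2 j ltac:(unfold j; lia)). specialize (H3 j ltac:(unfold j; lia)).
    unfold Rdist in H1, H2, H3.
    assert (Hjq : edist (fst (sq j)) q <= 3 * eta).
    { eapply Rle_trans. apply edist_le_sum. unfold q. cbn [vx vy vz fst snd]. lra. }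
    pose proof (Close k j ltac:(unfold j; lia)).
    pose proof (edist_tri (fst (sq k)) (fst (sq j)) q). unfold eta in *. lra. }
  exists q. split; [|split].
  - apply (Gk 0%nat q (Hq 1%nat)).
  - intros n. apply (Gk n q (Hq (S n))).
  - pose proof (Hq 0%nat). simpl in H. unfold r0 in H. pose proof (Rmin_l (eps/2) (mincoord p / 2)). lra.
Qed.

Definition qgrid (k i1 i2 i3 : nat) : vec :=
  (INR i1 / INR (S k) - INR k, INR i2 / INR (S k) - INR k, INR i3 / INR (S k) - INR k).
Definition cgrid (k : nat) := 4 / INR (S k).

Definition Nfam (Att : vec -> vec -> Prop) (n : nat) : vec -> Prop :=
  let '(k, r) := Cantor.of_nat n in let '(i1, r2) := Cantor.of_nat r in let '(i2, i3) := Cantor.of_nat r2 in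
  Nset Att (qgrid k i1 i2 i3) (cgrid k).

Lemma Nfam_code Att k i1 i2 i3 :
  Nfam Att (Cantor.to_nat (k, Cantor.to_nat (i1, Cantor.to_nat (i2, i3)))) = Nset Att (qgrid k i1 i2 i3) (cgrid k).
Proof. unfold Nfam. rewrite !Cantor.cancel_of_to. reflexivity. Qed.

Lemma grid_coord (k : nat) (w : R) : 0 <= w + INR k ->
  exists i : nat, INR i <= (w + INR k) * INR (S k) /\ Rabs (w - (INR i / INR (S k) - INR k)) < 1 / INR (S k).
Proof.
  intros Hw. set (v := (w + INR k) * INR (S k)).
  assert (HS : 0 < INR (S k)) by (apply lt_0_INR; lia).
  assert (Hv : 0 <= v) by (unfold v; apply Rmult_le_pos; lra).
  destruct (base_Int_part v) as [B1 B2].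
  assert (Hnn : (0 <= Int_part v)%Z). { apply le_IZR. simpl. assert (IZR (Int_part v) > -1) by lra. 
    destruct (Z_le_gt_dec 0 (Int_part v)) as [h|h]; [apply IZR_le; exact h|]. 
    assert (Int_part v <= -1)%Z by lia. apply IZR_le in H0. simpl in H0. lra. }
  exists (Z.to_nat (Int_part v)). rewrite INR_IZR_INZ, Z2Nat.id by exact Hnn.
  split; [exact B1|].
  assert (E : w - (IZR (Int_part v) / INR (S k) - INR k) = (v - IZR (Int_part v)) / INR (S k)) by (unfold v; field; lra).
  rewrite E. rewrite Rabs_right. 2:{ apply Rle_ge. apply Rdiv_le_0_compat; lra. }
  unfold Rdiv. apply Rmult_lt_compat_r. apply Rinv_0_lt_compat; lra. lra.
Qed.

Lemma nat_bound_of (x : R) : exists I : nat, x < INR I.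
Proof.
  destruct (archimed x) as [H _]. exists (Z.to_nat (up x) + 1)%nat.
  rewrite plus_INR. simpl. destruct (Z_le_gt_dec 0 (up x)) as [h|h].
  - rewrite INR_IZR_INZ, Z2Nat.id by exact h. lra.
  - pose proof (pos_INR (Z.to_nat (up x))). assert (up x <= -1)%Z by lia. apply IZR_le in H1. simpl in H1. lra.
Qed.

Lemma grid_point k Mb y I : 0 <= Mb -> Mb <= INR k -> (Mb + INR k) * INR (S k) < INR I ->
  Rabs (vx y) <= Mb -> Rabs (vy y) <= Mb -> Rabs (vz y) <= Mb ->
  exists i1 i2 i3, (i1 < I)%nat /\ (i2 < I)%nat /\ (i3 < I)%nat /\ edist y (qgrid k i1 i2 i3) < 3 / INR (S k).
Proof.
  intros HMb Hk HI Hx Hy Hz.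
  assert (HS : 0 < INR (S k)) by (apply lt_0_INR; lia).
  assert (G : forall w, Rabs w <= Mb -> exists i, (i < I)%nat /\ Rabs (w - (INR i / INR (S k) - INR k)) < 1 / INR (S k)).
  { intros w Hw. apply Rabs_le_between in Hw. destruct (grid_coord k w) as [i [Hi1 Hi2]]; [lra|].
    exists i. split; [|exact Hi2]. apply INR_lt. eapply Rle_lt_trans; [exact Hi1|]. eapply Rle_lt_trans; [|exact HI].
    apply Rmult_le_compat_r; lra. }
  destruct (G _ Hx) as [i1 [Hi1 E1]]. destruct (G _ Hy) as [i2 [Hi2 E2]]. destruct (G _ Hz) as [i3 [Hi3 E3]].
  exists i1, i2, i3. split; [exact Hi1|]. split; [exact Hi2|]. split; [exact Hi3|].
  eapply Rle_lt_trans. apply edist_le_sum. unfold qgrid; cbn [vx vy vz fst snd].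
  replace (3 / INR (S k)) with (1 / INR (S k) + 1 / INR (S k) + 1 / INR (S k)) by (field; lra). lra.
Qed.

Theorem theorem6p2 :
  forall Att : vec -> vec -> Prop,
    (forall l, posoct l -> is_global_attractor l (Att l)) ->
    exists Lstar : vec -> Prop,
      (forall l, Lstar l -> posoct l) /\
      residual_in posoct Lstar /\
      dense_in posoct Lstar /\
      (forall l, Lstar l ->
         forall eps, 0 < eps -> exists delta, 0 < delta /\
           forall m, posoct m -> edist m l < delta ->
             Rbar_lt (hausdorff_dist (Att m) (Att l)) (Finite eps)).
Proof.
  intros Att HA.
  assert (HN : forall n, nowhere_dense_in posoct (Nfam Att n)).
  { intros n. unfold Nfam. destruct (Cantor.of_nat n) as [k r]. destruct (Cantor.of_nat r) as [i1 r2].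
    destruct (Cantor.of_nat r2) as [i2 i3]. apply Nset_nowhere, HA. }
  exists (fun l => posoct l /\ forall n, ~ Nfam Att n l).
  split; [intros l [H _]; exact H|]. split; [|split].
  - exists (Nfam Att). split; [exact HN|]. intros p Hp Hn. apply NNPP. intros Hn2. apply Hn. split; [exact Hp|].
    intros n Hnp. apply Hn2. exists n. exact Hnp.
  - intros p Hp eps Heps. destruct (baire (Nfam Att) HN p Hp eps Heps) as [q [Hq [Hqn Hpq]]].
    exists q. split; [split; assumption|exact Hpq].
  - intros l [Hl Hln] eps Heps.
    destruct (usc Att HA l Hl (eps / 2) ltac:(lra)) as [d1 [Hd1 Hu]].
    destruct (HA l Hl) as [[_ [Mb0 HMb]] _].
    set (Mb := Rmax Mb0 0).
    assert (HMb0 : 0 <= Mb) by apply Rmax_r.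
    assert (Hcoord : forall y, Att l y -> Rabs (vx y) <= Mb /\ Rabs (vy y) <= Mb /\ Rabs (vz y) <= Mb).
    { intros y Hy. specialize (HMb y Hy). destruct (edist_coord y (0,0,0)) as [c1 [c2 c3]].
      cbn [vx vy vz fst snd] in c1, c2, c3. rewrite Rminus_0_r in c1, c2, c3. pose proof (Rmax_l Mb0 0). fold Mb in H. lra. }
    destruct (nat_bound_of (Mb + 16 / eps)) as [k Hk].
    assert (H16 : 0 < 16 / eps) by (apply Rdiv_lt_0_compat; lra).
    assert (HS : 0 < INR (S k)) by (apply lt_0_INR; lia).
    assert (HSk : INR (S k) = INR k + 1) by apply S_INR.
    assert (Hh : 8 / INR (S k) < eps / 2).
    { apply Rmult_lt_reg_r with (INR (S k)); [lra|]. unfold Rdiv. rewrite Rmult_assoc, Rinv_l by lra.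
      assert (16 / eps < INR (S k)) by lra.
      assert (16 < eps * INR (S k)).
      { apply Rmult_lt_reg_r with (/ eps). apply Rinv_0_lt_compat; lra.
        replace (eps * INR (S k) * / eps) with (INR (S k)) by (field; lra). exact H. }
      lra. }
    destruct (nat_bound_of ((Mb + INR k) * INR (S k))) as [I HI].
    set (P := fun i1 i2 i3 d => Eset Att (qgrid k i1 i2 i3) (cgrid k) l ->
                 forall z, posoct z -> edist l z < d -> Eset Att (qgrid k i1 i2 i3) (cgrid k) z).
    assert (Pmono : forall i1 i2 i3 d d', 0 < d' <= d -> P i1 i2 i3 d -> P i1 i2 i3 d').
    { intros i1 i2 i3 d d' Hd HP HE z Hz Hlz. apply HP; [exact HE|exact Hz|lra]. }
    assert (Pex : forall i1 i2 i3, exists d, 0 < d /\ P i1 i2 i3 d).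
    { intros i1 i2 i3. destruct (classic (Eset Att (qgrid k i1 i2 i3) (cgrid k) l)) as [HE|HnE].
      - assert (Hnot := Hln (Cantor.to_nat (k, Cantor.to_nat (i1, Cantor.to_nat (i2, i3))))).
        rewrite Nfam_code in Hnot.
        destruct (classic (exists d, 0 < d /\ forall z, posoct z -> edist l z < d -> Eset Att (qgrid k i1 i2 i3) (cgrid k) z)) as [[d [Hd Hz]]|Hno].
        + exists d. split; [exact Hd|]. intros _. exact Hz.
        + exfalso. apply Hnot. split; assumption.
      - exists 1. split; [lra|]. intros HE. contradiction. }
    destruct (fin_min (fun i1 d => forall i2 i3, (i2 < I)%nat -> (i3 < I)%nat -> P i1 i2 i3 d) I) as [dg [Hdg Hdgp]].
    { intros i1 d d' Hd H i2 i3 H2 H3. apply (Pmono i1 i2 i3 d d' Hd). apply H; assumption. }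
    { intros i1 _.
      destruct (fin_min (fun i2 d => forall i3, (i3 < I)%nat -> P i1 i2 i3 d) I) as [d2 [Hd2 Hd2p]].
      { intros i2 d d' Hd H i3 H3. apply (Pmono i1 i2 i3 d d' Hd). apply H; assumption. }
      { intros i2 _. apply (fin_min (fun i3 d => P i1 i2 i3 d) I).
        - intros i3 d d' Hd H. apply (Pmono i1 i2 i3 d d' Hd H).
        - intros i3 _. apply Pex. }
      exists d2. split; [exact Hd2|]. intros i2 i3 H2 H3. apply Hd2p; assumption. }
    exists (Rmin d1 dg). split; [apply Rmin_glb_lt; lra|].
    intros m Hm Hml. apply (hausdorff_lt _ _ (eps / 2)); [lra| |].
    + intros a Ha. apply (Hu m Hm); [eapply Rlt_le_trans; [exact Hml|apply Rmin_l]|exact Ha].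
    + intros y Hy. destruct (Hcoord y Hy) as [c1 [c2 c3]].
      destruct (grid_point k Mb y I HMb0 ltac:(lra) HI c1 c2 c3) as [i1 [i2 [i3 [H1 [H2 [H3 Hyq]]]]]].
      assert (HEl : Eset Att (qgrid k i1 i2 i3) (cgrid k) l).
      { split; [exact Hl|]. intros eta Heta. exists y. split; [exact Hy|]. rewrite edist_sym.
        unfold cgrid. assert (3 / INR (S k) < 4 / INR (S k)).
        { unfold Rdiv. apply Rmult_lt_compat_r. apply Rinv_0_lt_compat; lra. lra. } lra. }
      assert (HEm := Hdgp i1 H1 i2 i3 H2 H3 HEl m Hm ltac:(rewrite edist_sym; eapply Rlt_le_trans; [exact Hml|apply Rmin_r])).
      destruct HEm as [_ HEm]. destruct (HEm (1 / INR (S k))) as [a [Ha Hqa]].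
      { apply Rdiv_lt_0_compat; lra. }
      exists a. split; [exact Ha|]. pose proof (edist_tri y (qgrid k i1 i2 i3) a).
      unfold cgrid in Hqa. 
      assert (3 / INR (S k) + (4 / INR (S k) + 1 / INR (S k)) = 8 / INR (S k)) by (field; lra).
      lra.
Qed.
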